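(* Let $C\subset\mathbb R^3$ be a non-closed embedded curve of length $l>0$ with nowhere vanishing curvature and orientation-compatible arc-length parametrization $\mathbf c:[-l/2,l/2]\to\mathbb R^3$, and suppose $C$ does not lie in any plane. Let $F\in\mathcal D_*(C)$ be a normal form with $F(s,0)=\mathbf c(s)$. Then $F(\Omega_\epsilon)$ is congruent to $F_*(\Omega_\epsilon)$ for sufficiently small $\epsilon>0$ if and only if $C$ has a positive symmetry.
   Context: $-C$ is $C$ with the opposite orientation; $\kappa$ is the curvature of $\mathbf c$; $\Omega_\epsilon=[-l/2,l/2]\times(-\epsilon,\epsilon)$. ''$F(\Omega_\epsilon)$ congruent to $G(\Omega_\epsilon)$ for sufficiently small $\epsilon$'' means there exist an isometry $T$ of $\mathbb R^3$ and $\epsilon_0>0$ with $T(F(\Omega_\epsilon))=G(\Omega_\epsilon)$ for all $0<\epsilon<\epsilon_0$. A developable strip along $C$ is the germ of a $C^\infty$ embedding $f(u,v)=f(u,0)+v\,\xi_f(u)$ with $\mathbf c_f(u)=f(u,0)$ parametrizing $C$, $\xi_f$ unit, and zero Gaussian curvature; with the Frenet frame $(\mathbf e,\mathbf n,\mathbf b)$ of $\mathbf c_f$ write $\xi_f=\cos\beta_f\,\mathbf e+\sin\beta_f(\cos\alpha_f\,\mathbf n+\sin\alpha_f\,\mathbf b)$. $\mathcal D(C)$: strips with $\mathbf c_f$ inducing the orientation of $C$ and $0<|\cos\alpha_f|<1$, normalized by $0<|\alpha_f|<\pi/2$ (first angular function), $0<\beta_f<\pi$. Geodesic curvature $\mu_f=\kappa_f\cos\alpha_f$;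 admissible ($\in\mathcal D_*(C)$) if $\mu_f<\min\kappa_f$ everywhere. A normal form is such a strip $F(s,v)$ defined near $[-l/2,l/2]\times\{0\}$ with $s\mapsto F(s,0)$ an arc-length parametrization of $C$ (either orientation); it is determined by that parametrization and its first angular function. Inverse: $F_*\in\mathcal D_*(-C)$ is the normal form with $F_*(s,0)=\mathbf c(-s)$ whose first angular function (w.r.t. the Frenet frame of $s\mapsto\mathbf c(-s)$) has the same sign as $\alpha_F(s)$ and satisfies $\kappa(-s)\cos\alpha_{F_*}(s)=\kappa(s)\cos\alpha_F(s)$. A positive symmetry of $C$ is an orientation-preserving isometry $T\ne\mathrm{id}$ of $\mathbb R^3$ with $T(C)=C$. *)

(* Defs.v *)
From Stdlib Require Import Reals List.
From Coquelicot Require Import Coquelicot.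
Open Scope R_scope.

Definition vec := (R * R * R)%type.
Definition mkv (x y z : R) : vec := (x, y, z).
Definition vx (p : vec) : R := fst (fst p).
Definition vy (p : vec) : R := snd (fst p).
Definition vz (p : vec) : R := snd p.
Definition vadd (p q : vec) : vec := mkv (vx p + vx q) (vy p + vy q) (vz p + vz q).
Definition vsub (p q : vec) : vec := mkv (vx p - vx q) (vy p - vy q) (vz p - vz q).
Definition vscale (a : R) (p : vec) : vec := mkv (a * vx p) (a * vy p) (a * vz p).
Definition dot (p q : vec) : R := vx p * vx q + vy p * vy q + vz p * vz q.
Definition cross (p q : vec) : vec :=
  mkv (vy p * vz q - vz p * vy q) (vz p * vx q - vx p * vz q) (vx p * vy q - vy p * vx q).
Definition vnorm (p : vec) : R := sqrt (dot p p).
Definition vdist (p q : vec) : R := vnorm (vsub p q).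
Definition det3 (a b c : vec) : R := dot (cross a b) c.
Definition vzero : vec := mkv 0 0 0.
Definition e1 : vec := mkv 1 0 0.
Definition e2 : vec := mkv 0 1 0.
Definition e3 : vec := mkv 0 0 1.

Definition vderive (f : R -> vec) (t : R) : vec :=
  mkv (Derive (fun s => vx (f s)) t) (Derive (fun s => vy (f s)) t)
      (Derive (fun s => vz (f s)) t).

Definition open1 (U : R -> Prop) : Prop :=
  forall x, U x -> exists e, 0 < e /\ forall y, Rabs (y - x) < e -> U y.
Definition open2 (U : R -> R -> Prop) : Prop :=
  forall u v, U u v -> exists e, 0 < e /\
    forall u' v', Rabs (u' - u) < e -> Rabs (v' - v) < e -> U u' v'.

Definition smooth1_on (U : R -> Prop) (g : R -> R) : Prop :=
  open1 U /\ forall n x, U x -> ex_derive_n g n x.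
Definition vsmooth1_on (U : R -> Prop) (f : R -> vec) : Prop :=
  smooth1_on U (fun s => vx (f s)) /\ smooth1_on U (fun s => vy (f s)) /\
  smooth1_on U (fun s => vz (f s)).

(** iterated partial derivatives of g : R -> R -> R ; true = d/du, false = d/dv *)
Fixpoint pd (l : list bool) (g : R -> R -> R) : R -> R -> R :=
  match l with
  | nil => g
  | b :: l' => if b then (fun u v => Derive (fun t => pd l' g t v) u)
               else (fun u v => Derive (fun t => pd l' g u t) v)
  end.

Definition smooth2_on (U : R -> R -> Prop) (g : R -> R -> R) : Prop :=
  open2 U /\ forall (l : list bool) u v, U u v ->
    ex_derive (fun t => pd l g t v) u /\ ex_derive (fun t => pd l g u t) v /\
    continuous (fun p : R * R => pd l g (fst p) (snd p)) (u, v).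
Definition vsmooth2_on (U : R -> R -> Prop) (F : R -> R -> vec) : Prop :=
  smooth2_on U (fun u v => vx (F u v)) /\ smooth2_on U (fun u v => vy (F u v)) /\
  smooth2_on U (fun u v => vz (F u v)).

Definition pu (F : R -> R -> vec) : R -> R -> vec := fun u v => vderive (fun t => F t v) u.
Definition pv (F : R -> R -> vec) : R -> R -> vec := fun u v => vderive (fun t => F u t) v.

Definition gauss_curv (F : R -> R -> vec) (u v : R) : R :=
  let fu := pu F u v in let fv := pv F u v in
  let nu := vscale (/ vnorm (cross fu fv)) (cross fu fv) in
  let E := dot fu fu in let Fc := dot fu fv in let G := dot fv fv in
  let L := dot (pu (pu F) u v) nu in
  let M := dot (pv (pu F) u v) nu in
  let N := dot (pv (pv F) u v) nu in
  (L * N - M * M) / (E * G - Fc * Fc).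

Definition tangent (g : R -> vec) (s : R) : vec := vderive g s.
Definition curv (g : R -> vec) (s : R) : R := vnorm (vderive (vderive g) s).
Definition pnormal (g : R -> vec) (s : R) : vec :=
  vscale (/ curv g s) (vderive (vderive g) s).
Definition binormal (g : R -> vec) (s : R) : vec := cross (tangent g s) (pnormal g s).

Definition Iv (l s : R) : Prop := - (l / 2) <= s <= l / 2.
Definition Omega (l eps : R) (s v : R) : Prop := Iv l s /\ - eps < v < eps.

(** The germ is represented by a total function together with an
    open neighbourhood U of [-l/2,l/2] x {0} on which these properties hold;
    "embedding" = injective immersion on U (equivalent for germs along a
    compact set). *)
Definition normal_form_strip (l : R) (g : R -> vec) (F : R -> R -> vec) : Prop :=
  exists (U : R -> R -> Prop) (xi : R -> vec),
    open2 U /\ (forall s, Iv l s -> U s 0) /\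
    vsmooth2_on U F /\
    (forall s v, U s v -> cross (pu F s v) (pv F s v) <> vzero) /\
    (forall s v s' v', U s v -> U s' v' -> F s v = F s' v' -> s = s' /\ v = v') /\
    (forall s v, U s v -> F s v = vadd (g s) (vscale v (xi s))) /\
    (forall s v, U s v -> vnorm (xi s) = 1) /\
    (forall s v, U s v -> gauss_curv F s v = 0).

Definition first_angular (l : R) (g : R -> vec) (F : R -> R -> vec) (alpha : R -> R) : Prop :=
  exists beta : R -> R, forall s, Iv l s ->
    0 < Rabs (alpha s) < PI / 2 /\ 0 < beta s < PI /\
    pv F s 0 = vadd (vscale (cos (beta s)) (tangent g s))
                    (vscale (sin (beta s))
                       (vadd (vscale (cos (alpha s)) (pnormal g s))
                             (vscale (sin (alpha s)) (binormal g s)))).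

(** F is a normal form in D_*: admissible, i.e. the geodesic curvature
    mu = kappa cos alpha is < min kappa everywhere on [-l/2,l/2]. *)
Definition in_Dstar_normal (l : R) (g : R -> vec) (F : R -> R -> vec) (alpha : R -> R) : Prop :=
  normal_form_strip l g F /\ first_angular l g F alpha /\
  (forall s t, Iv l s -> Iv l t -> curv g s * cos (alpha s) < curv g t).

Definition good_curve (l : R) (c : R -> vec) : Prop :=
  0 < l /\
  (exists U, (forall s, Iv l s -> U s) /\ vsmooth1_on U c) /\
  (forall s, Iv l s -> vnorm (vderive c s) = 1) /\
  (forall s t, Iv l s -> Iv l t -> c s = c t -> s = t) /\
  (forall s, Iv l s -> 0 < curv c s) /\
  ~ (exists (m : vec) (d : R), m <> vzero /\ forall s, Iv l s -> dot m (c s) = d).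

Definition isometry (T : vec -> vec) : Prop := forall p q, vdist (T p) (T q) = vdist p q.
Definition orientation_preserving (T : vec -> vec) : Prop :=
  0 < det3 (vsub (T e1) (T vzero)) (vsub (T e2) (T vzero)) (vsub (T e3) (T vzero)).

Definition congruent_small (l : R) (F G : R -> R -> vec) : Prop :=
  exists (T : vec -> vec) (eps0 : R), isometry T /\ 0 < eps0 /\
    forall eps, 0 < eps < eps0 ->
      forall p : vec,
        (exists s v, Omega l eps s v /\ p = T (F s v)) <->
        (exists s v, Omega l eps s v /\ p = G s v).

Definition positive_symmetry (l : R) (c : R -> vec) (T : vec -> vec) : Prop :=
  isometry T /\ orientation_preserving T /\ (exists p, T p <> p) /\
  (forall s, Iv l s -> exists t, Iv l t /\ T (c s) = c t) /\
  (forall t, Iv l t -> exists s, Iv l s /\ T (c s) = c t).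

(* Main.v *)
Require Import Defs.
From Stdlib Require Import Reals Lra Psatz ClassicalEpsilon Classical.
From Coquelicot Require Import Coquelicot.
Open Scope R_scope.

Definition app_vec (f1 f2 f3 p : vec) : vec :=
  vadd (vadd (vscale (vx p) f1) (vscale (vy p) f2)) (vscale (vz p) f3).

Ltac vdestr := repeat match goal with
  | p : vec |- _ => let a := fresh "a" in let b := fresh "b" in let c := fresh "c" in destruct p as [[a b] c]
  end.
Ltac vunf := unfold det3, app_vec in *; unfold vadd, vsub, vscale, dot, cross, mkv, vx, vy, vz, vzero, e1, e2, e3 in *; simpl in *.


Ltac vunfg := unfold det3, app_vec; unfold vadd, vsub, vscale, dot, cross, mkv, vx, vy, vz, vzero, e1, e2, e3; simpl.

Lemma vec_ext (p q : vec) : vx p = vx q -> vy p = vy q -> vz p = vz q -> p = q.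
Proof. destruct p as [[a b] c], q as [[d e] f]; unfold vx, vy, vz; simpl; intros; subst; auto. Qed.

Lemma dot_ge0 p : 0 <= dot p p.
Proof. vdestr; vunf; nra. Qed.

Lemma dot_zero p : dot p p = 0 -> p = vzero.
Proof. vdestr; vunf; intros H.
  assert (Ha : a * a = 0) by (apply Rle_antisym; nra).
  assert (Hb : b * b = 0) by (apply Rle_antisym; nra).
  assert (Hc : c * c = 0) by (apply Rle_antisym; nra).
  apply Rmult_integral in Ha, Hb, Hc. 
  destruct Ha, Hb, Hc; subst; reflexivity. Qed.

Lemma dot_comm p q : dot p q = dot q p.
Proof. vdestr; vunf; ring. Qed.

Lemma vsub_0r u : vsub u vzero = u.
Proof. apply vec_ext; vdestr; vunf; ring. Qed.

Lemma vsub_eq0 u w : vsub u w = vzero -> u = w.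
Proof. intros H. assert (H1 : vx (vsub u w) = 0) by (rewrite H; reflexivity).
  assert (H2 : vy (vsub u w) = 0) by (rewrite H; reflexivity).
  assert (H3 : vz (vsub u w) = 0) by (rewrite H; reflexivity).
  apply vec_ext; vdestr; vunf; lra. Qed.

Lemma expand_sub_app u f1 f2 f3 p :
  dot (vsub u (app_vec f1 f2 f3 p)) (vsub u (app_vec f1 f2 f3 p)) =
  dot u u - 2 * (vx p * dot u f1 + vy p * dot u f2 + vz p * dot u f3)
  + vx p * vx p * dot f1 f1 + vy p * vy p * dot f2 f2 + vz p * vz p * dot f3 f3
  + 2 * (vx p * vy p * dot f1 f2 + vx p * vz p * dot f1 f3 + vy p * vz p * dot f2 f3).
Proof. vdestr; vunf; ring. Qed.

Lemma dot_app_expand f1 f2 f3 p q :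
  dot (app_vec f1 f2 f3 p) (app_vec f1 f2 f3 q) =
  vx p * vx q * dot f1 f1 + vy p * vy q * dot f2 f2 + vz p * vz q * dot f3 f3
  + (vx p * vy q + vy p * vx q) * dot f1 f2 + (vx p * vz q + vz p * vx q) * dot f1 f3
  + (vy p * vz q + vz p * vy q) * dot f2 f3.
Proof. vdestr; vunf; ring. Qed.

Lemma det_app f1 f2 f3 p q r :
  det3 (app_vec f1 f2 f3 p) (app_vec f1 f2 f3 q) (app_vec f1 f2 f3 r) = det3 f1 f2 f3 * det3 p q r.
Proof. vdestr; vunf; ring. Qed.

Lemma det_sq f1 f2 f3 :
  det3 f1 f2 f3 * det3 f1 f2 f3 =
  dot f1 f1 * (dot f2 f2 * dot f3 f3 - dot f2 f3 * dot f2 f3)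
  - dot f1 f2 * (dot f1 f2 * dot f3 f3 - dot f2 f3 * dot f1 f3)
  + dot f1 f3 * (dot f1 f2 * dot f2 f3 - dot f2 f2 * dot f1 f3).
Proof. vdestr; vunf; ring. Qed.

Record ortho (f1 f2 f3 : vec) : Prop := {
  o11 : dot f1 f1 = 1; o22 : dot f2 f2 = 1; o33 : dot f3 f3 = 1;
  o12 : dot f1 f2 = 0; o13 : dot f1 f3 = 0; o23 : dot f2 f3 = 0 }.

Lemma dot_app f1 f2 f3 p q : ortho f1 f2 f3 -> dot (app_vec f1 f2 f3 p) (app_vec f1 f2 f3 q) = dot p q.
Proof. intros [? ? ? ? ? ?]; rewrite dot_app_expand.
  repeat match goal with H : dot _ _ = _ |- _ => rewrite H; clear H end.
  vdestr; vunf; ring. Qed.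

Lemma det_pm1 f1 f2 f3 : ortho f1 f2 f3 -> det3 f1 f2 f3 = 1 \/ det3 f1 f2 f3 = -1.
Proof. intros [? ? ? ? ? ?]. pose proof (det_sq f1 f2 f3) as H.
  repeat match goal with H1 : dot _ _ = _ |- _ => rewrite H1 in H; clear H1 end.
  nra. Qed.

Lemma vdist_sq p q r s : vdist p q = vdist r s -> dot (vsub p q) (vsub p q) = dot (vsub r s) (vsub r s).
Proof. unfold vdist, vnorm. intros H. apply sqrt_inj; auto using dot_ge0. Qed.

Lemma iso_affine T : isometry T ->
  let f1 := vsub (T e1) (T vzero) in let f2 := vsub (T e2) (T vzero) in
  let f3 := vsub (T e3) (T vzero) in
  ortho f1 f2 f3 /\ forall p, T p = vadd (T vzero) (app_vec f1 f2 f3 p).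
Proof.
  intros HT f1 f2 f3.
  set (S := fun p => vsub (T p) (T vzero)).
  assert (HS : forall p q, dot (vsub (S p) (S q)) (vsub (S p) (S q)) = dot (vsub p q) (vsub p q)).
  { intros p q. rewrite <- (vdist_sq _ _ _ _ (HT p q)). unfold S. 
    generalize (T p) (T q) (T vzero). intros; vdestr; vunf; ring. }
  assert (HS0 : forall p, dot (S p) (S p) = dot p p).
  { intros p. specialize (HS p vzero).
    assert (Z : S vzero = vzero) by (unfold S; generalize (T vzero); intros; apply vec_ext; vdestr; vunf; ring).
    rewrite Z, !vsub_0r in HS. exact HS. }
  assert (HD : forall p q, dot (S p) (S q) = dot p q).
  { intros p q. pose proof (HS p q) as H1. pose proof (HS0 p). pose proof (HS0 q).
    revert H1 H H0. generalize (S p) (S q). intros u v. vdestr; vunf. intros. lra. }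
  assert (Ho : ortho f1 f2 f3).
  { unfold f1, f2, f3; split; fold (S e1) (S e2) (S e3); rewrite HD; vunf; ring. }
  split; auto.
  intros p.
  assert (E : S p = app_vec f1 f2 f3 p).
  { assert (Z : vsub (S p) (app_vec f1 f2 f3 p) = vzero).
    { apply dot_zero. rewrite expand_sub_app. destruct Ho.
      repeat match goal with H1 : dot _ _ = _ |- _ => rewrite H1; clear H1 end.
      unfold f1, f2, f3; fold (S e1) (S e2) (S e3). rewrite !HD. vdestr; vunf; ring. }
    apply vsub_eq0 in Z; exact Z. }
  rewrite <- E. unfold S. generalize (T p) (T vzero). intros. apply vec_ext; vdestr; vunf; ring.
Qed.

Lemma d_plus (f g : R -> R) (x a b : R) : is_derive f x a -> is_derive g x b -> is_derive (fun t => f t + g t) x (a+b).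
Proof. intros H H0; exact (is_derive_plus f g x a b H H0). Qed.
Lemma d_minus (f g : R -> R) (x a b : R) : is_derive f x a -> is_derive g x b -> is_derive (fun t => f t - g t) x (a-b).
Proof. intros H H0. pose proof (is_derive_minus f g x a b H H0) as K.
  eapply is_derive_ext; [|exact K]. intros t; reflexivity. Qed.
Lemma d_mult (f g : R -> R) (x a b : R) : is_derive f x a -> is_derive g x b -> is_derive (fun t => f t * g t) x (a * g x + f x * b).
Proof. intros H H0; exact (is_derive_mult f g x a b H H0 Rmult_comm). Qed.
Lemma d_const (k x : R) : is_derive (fun _ => k) x 0.
Proof. exact (is_derive_const k x). Qed.
Lemma d_id (x : R) : is_derive (fun t => t) x 1.
Proof. exact (is_derive_id x). Qed.
Lemma d_scal (f : R -> R) (x a k : R) : is_derive f x a -> is_derive (fun t => k * f t) x (k * a).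
Proof. apply is_derive_scal. Qed.
Lemma d_div (f g : R -> R) (x a b : R) : is_derive f x a -> is_derive g x b -> g x <> 0 ->
  is_derive (fun t => f t / g t) x ((a * g x - f x * b) / g x ^ 2).
Proof. apply is_derive_div. Qed.

Lemma d_eqv (f : R -> R) (x a b : R) : is_derive f x a -> a = b -> is_derive f x b.
Proof. intros H ->; exact H. Qed.

Definition near (x : R) (P : R -> Prop) := exists d, 0 < d /\ forall t, Rabs (t - x) < d -> P t.

Lemma near_locally x P : near x P -> locally x P.
Proof. intros [d [Hd H]]. exists (mkposreal d Hd). intros y Hy. apply H. exact Hy. Qed.

Lemma near_and x P Q : near x P -> near x Q -> near x (fun t => P t /\ Q t).
Proof. intros [d1 [H1 K1]] [d2 [H2 K2]]. exists (Rmin d1 d2). split. apply Rmin_glb_lt; auto.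
  intros t Ht. split; [apply K1 | apply K2]; eapply Rlt_le_trans; eauto; [apply Rmin_l|apply Rmin_r]. Qed.

Lemma near_mono x (P Q : R -> Prop) : (forall t, P t -> Q t) -> near x P -> near x Q.
Proof. intros H [d [Hd K]]. exists d; split; auto. Qed.

Lemma d_ext_near (f g : R -> R) (x a : R) : near x (fun t => f t = g t) -> is_derive f x a -> is_derive g x a.
Proof. intros H. apply is_derive_ext_loc. apply near_locally; auto. Qed.

Lemma Derive_ext_near (f g : R -> R) (x : R) : near x (fun t => f t = g t) -> Derive f x = Derive g x.
Proof. intros H. apply Derive_ext_loc. apply near_locally; auto. Qed.

Definition vder (f : R -> vec) (x : R) (D : vec) : Prop :=
  is_derive (fun t => vx (f t)) x (vx D) /\ is_derive (fun t => vy (f t)) x (vy D) /\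
  is_derive (fun t => vz (f t)) x (vz D).

Lemma vder_unique f x D : vder f x D -> vderive f x = D.
Proof. intros [H1 [H2 H3]]. unfold vderive.
  apply vec_ext; unfold mkv, vx at 1, vy at 1, vz at 1; simpl.
  exact (is_derive_unique _ _ _ H1). exact (is_derive_unique _ _ _ H2). exact (is_derive_unique _ _ _ H3). Qed.

Lemma vder_ext_near f g x D : near x (fun t => f t = g t) -> vder f x D -> vder g x D.
Proof. intros H [H1 [H2 H3]]. refine (conj _ (conj _ _)); (eapply d_ext_near; [|eassumption]);
  apply (near_mono x (fun t => f t = g t)); auto; intros t ->; reflexivity. Qed.

Lemma vderive_ext_near f g x : near x (fun t => f t = g t) -> vderive f x = vderive g x.
Proof. intros H. unfold vderive. f_equal; apply Derive_ext_near;
  apply (near_mono x (fun t => f t = g t)); auto; intros t ->; reflexivity. Qed.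

Lemma vder_const (p : vec) x : vder (fun _ => p) x vzero.
Proof. refine (conj _ (conj _ _)); apply d_const. Qed.

Lemma vder_add f g x D E : vder f x D -> vder g x E -> vder (fun t => vadd (f t) (g t)) x (vadd D E).
Proof. intros [? [? ?]] [? [? ?]]. refine (conj _ (conj _ _)); unfold vadd, mkv, vx, vy, vz; simpl; apply d_plus; auto. Qed.

Lemma vder_sub f g x D E : vder f x D -> vder g x E -> vder (fun t => vsub (f t) (g t)) x (vsub D E).
Proof. intros [? [? ?]] [? [? ?]]. refine (conj _ (conj _ _)); unfold vsub, mkv, vx, vy, vz; simpl; apply d_minus; auto. Qed.

Lemma vder_scalf a f x a' D : is_derive a x a' -> vder f x D ->
  vder (fun t => vscale (a t) (f t)) x (vadd (vscale a' (f x)) (vscale (a x) D)).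
Proof. intros Ha [? [? ?]]. refine (conj _ (conj _ _)); unfold vadd, vscale, mkv, vx, vy, vz; simpl;
  apply d_mult; auto. Qed.

Lemma vder_scal k f x D : vder f x D -> vder (fun t => vscale k (f t)) x (vscale k D).
Proof. intros [? [? ?]]. refine (conj _ (conj _ _)); unfold vscale, mkv, vx, vy, vz; simpl; apply d_scal; auto. Qed.

Lemma d_lin x (p q : R) : is_derive (fun t => p + t * q) x q.
Proof. pose proof (d_plus _ _ x _ _ (d_const p x) (d_mult _ _ x _ _ (d_id x) (d_const q x))) as H.
  eapply d_eqv; [exact H|]. simpl; ring. Qed.

Lemma vder_line (p q : vec) x : vder (fun t => vadd p (vscale t q)) x q.
Proof. refine (conj _ (conj _ _)); unfold vadd, vscale, mkv, vx, vy, vz; simpl; apply d_lin. Qed.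


Lemma d_ext (f g : R -> R) (x a : R) : (forall t, f t = g t) -> is_derive f x a -> is_derive g x a.
Proof. intros H K. eapply is_derive_ext; [exact H|exact K]. Qed.

Lemma vder_eqv f x D D' : vder f x D -> D = D' -> vder f x D'.
Proof. intros H ->; exact H. Qed.

Lemma d_lin3 (u v w : R -> R) (x a b c k0 k1 k2 k3 : R) : is_derive u x a -> is_derive v x b -> is_derive w x c ->
  is_derive (fun t => k0 + u t * k1 + v t * k2 + w t * k3) x (a*k1 + b*k2 + c*k3).
Proof. intros Hu Hv Hw.
  pose proof (d_plus _ _ x _ _ (d_plus _ _ x _ _ (d_plus _ _ x _ _ (d_const k0 x) (d_mult _ _ x _ _ Hu (d_const k1 x)))
     (d_mult _ _ x _ _ Hv (d_const k2 x))) (d_mult _ _ x _ _ Hw (d_const k3 x))) as K.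
  eapply d_eqv; [exact K|]. cbv beta. ring. Qed.

Lemma vder_app f1 f2 f3 (b : vec) f x D : vder f x D ->
  vder (fun t => vadd b (app_vec f1 f2 f3 (f t))) x (app_vec f1 f2 f3 D).
Proof. intros [H1 [H2 H3]]. refine (conj _ (conj _ _)).
  - eapply d_ext; [|eapply d_eqv; [apply (d_lin3 _ _ _ x _ _ _ (vx b) (vx f1) (vx f2) (vx f3) H1 H2 H3)|]].
    intros t; cbv beta; generalize (f t); intros; vdestr; vunf; ring. vdestr; vunf; ring.
  - eapply d_ext; [|eapply d_eqv; [apply (d_lin3 _ _ _ x _ _ _ (vy b) (vy f1) (vy f2) (vy f3) H1 H2 H3)|]].
    intros t; cbv beta; generalize (f t); intros; vdestr; vunf; ring. vdestr; vunf; ring.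
  - eapply d_ext; [|eapply d_eqv; [apply (d_lin3 _ _ _ x _ _ _ (vz b) (vz f1) (vz f2) (vz f3) H1 H2 H3)|]].
    intros t; cbv beta; generalize (f t); intros; vdestr; vunf; ring. vdestr; vunf; ring.
Qed.

Lemma d_dot f g x D E : vder f x D -> vder g x E ->
  is_derive (fun t => dot (f t) (g t)) x (dot D (g x) + dot (f x) E).
Proof. intros [H1 [H2 H3]] [K1 [K2 K3]].
  pose proof (d_plus _ _ x _ _ (d_plus _ _ x _ _ (d_mult _ _ x _ _ H1 K1) (d_mult _ _ x _ _ H2 K2)) (d_mult _ _ x _ _ H3 K3)) as K.
  eapply d_ext; [|eapply d_eqv; [exact K|]]. intros t; unfold dot; reflexivity.
  unfold dot; ring. Qed.

Lemma deriv_o (f : R -> R) (x l : R) : is_derive f x l -> forall eta, 0 < eta ->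
  exists d, 0 < d /\ forall t, Rabs (t - x) < d -> Rabs (f t - f x - l * (t - x)) <= eta * Rabs (t - x).
Proof. intros H eta He. apply is_derive_Reals in H. destruct (H eta He) as [d Hd].
  exists d; split; [apply cond_pos|]. intros t Ht.
  destruct (Req_dec t x) as [->|Hne].
  - replace (f x - f x - l * (x - x)) with 0 by ring. rewrite Rabs_R0, Rminus_diag, Rabs_R0; lra.
  - assert (Hh : t - x <> 0) by lra. specialize (Hd (t - x) Hh Ht). replace (x + (t - x)) with t in Hd by ring.
    replace (f t - f x - l * (t - x)) with (((f t - f x) / (t - x) - l) * (t - x)) by (field; auto).
    rewrite Rabs_mult. apply Rmult_le_compat_r; [apply Rabs_pos|lra]. Qed.

Definition cont_at (f : R -> R) x := forall eps, 0 < eps -> exists d, 0 < d /\ forall t, Rabs (t - x) < d -> Rabs (f t - f x) < eps.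

Lemma deriv_cont (f : R -> R) (x l : R) : is_derive f x l -> cont_at f x.
Proof. intros H eps He. destruct (deriv_o f x l H 1 Rlt_0_1) as [d [Hd K]].
  exists (Rmin d (eps / (Rabs l + 2))). split.
  { apply Rmin_glb_lt; auto. apply Rdiv_lt_0_compat; auto. pose proof (Rabs_pos l); lra. }
  intros t Ht. assert (Ht1 : Rabs (t - x) < d) by (eapply Rlt_le_trans; [exact Ht|apply Rmin_l]).
  assert (Ht2 : Rabs (t - x) < eps / (Rabs l + 2)) by (eapply Rlt_le_trans; [exact Ht|apply Rmin_r]).
  specialize (K t Ht1).
  assert (Rabs (f t - f x) <= (Rabs l + 1) * Rabs (t - x)).
  { replace (f t - f x) with ((f t - f x - l * (t - x)) + l * (t - x)) by ring.
    eapply Rle_trans; [apply Rabs_triang|]. rewrite Rabs_mult. lra. }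
  assert (Hp : 0 < Rabs l + 2) by (pose proof (Rabs_pos l); lra).
  apply (Rmult_lt_compat_l (Rabs l + 2)) in Ht2; auto.
  replace ((Rabs l + 2) * (eps / (Rabs l + 2))) with eps in Ht2 by (field; lra).
  pose proof (Rabs_pos (t - x)). nra. Qed.

Lemma cont_at_pt (f : R -> R) (x : R) : cont_at f x -> continuity_pt f x.
Proof. intros H. unfold continuity_pt, continue_in, limit1_in, limit_in. intros eps He.
  destruct (H eps He) as [d [Hd K]]. exists d; split; auto. intros t [_ Ht].
  simpl in *. unfold R_dist in *. apply K; auto. Qed.

Lemma deriv_cont_pt (f : R -> R) (x l : R) : is_derive f x l -> continuity_pt f x.
Proof. intros H; apply cont_at_pt; eapply deriv_cont; eauto. Qed.

Lemma cont_plus f g x : cont_at f x -> cont_at g x -> cont_at (fun t => f t + g t) x.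
Proof. intros Hf Hg eps He. destruct (Hf (eps/2)) as [d1 [H1 K1]]; [lra|].
  destruct (Hg (eps/2)) as [d2 [H2 K2]]; [lra|]. exists (Rmin d1 d2); split; [apply Rmin_glb_lt; auto|].
  intros t Ht. assert (A1 : Rabs (t - x) < d1) by (eapply Rlt_le_trans; [exact Ht|apply Rmin_l]).
  assert (A2 : Rabs (t - x) < d2) by (eapply Rlt_le_trans; [exact Ht|apply Rmin_r]).
  specialize (K1 t A1); specialize (K2 t A2).
  replace (f t + g t - (f x + g x)) with ((f t - f x) + (g t - g x)) by ring.
  eapply Rle_lt_trans; [apply Rabs_triang|]. lra. Qed.

Lemma cont_mult f g x : cont_at f x -> cont_at g x -> cont_at (fun t => f t * g t) x.
Proof. intros Hf Hg eps He.
  set (M := Rabs (f x) + Rabs (g x) + 1).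
  assert (HM : 0 < M) by (unfold M; pose proof (Rabs_pos (f x)); pose proof (Rabs_pos (g x)); lra).
  set (e := Rmin 1 (eps / (2 * M))).
  assert (He' : 0 < e) by (apply Rmin_glb_lt; [lra| apply Rdiv_lt_0_compat; lra]).
  destruct (Hf e He') as [d1 [H1 K1]]. destruct (Hg e He') as [d2 [H2 K2]].
  exists (Rmin d1 d2); split; [apply Rmin_glb_lt; auto|].
  intros t Ht. assert (A1 : Rabs (t - x) < d1) by (eapply Rlt_le_trans; [exact Ht|apply Rmin_l]).
  assert (A2 : Rabs (t - x) < d2) by (eapply Rlt_le_trans; [exact Ht|apply Rmin_r]).
  specialize (K1 t A1); specialize (K2 t A2).
  assert (e1 : e <= 1) by apply Rmin_l. assert (e2 : e <= eps / (2 * M)) by apply Rmin_r.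
  assert (e3 : 2 * M * e <= eps).
  { apply (Rmult_le_compat_l (2 * M)) in e2; [|lra]. replace (2 * M * (eps / (2 * M))) with eps in e2 by (field; lra). lra. }
  replace (f t * g t - f x * g x) with ((f t - f x) * (g t - g x) + (f t - f x) * g x + f x * (g t - g x)) by ring.
  eapply Rle_lt_trans; [apply Rabs_triang|]. eapply Rle_lt_trans; [apply Rplus_le_compat_r; apply Rabs_triang|].
  rewrite !Rabs_mult. pose proof (Rabs_pos (f t - f x)). pose proof (Rabs_pos (g t - g x)).
  pose proof (Rabs_pos (f x)). pose proof (Rabs_pos (g x)).
  assert (Rabs (f t - f x) * Rabs (g t - g x) <= e * e) by (apply Rmult_le_compat; lra).
  assert (Rabs (f t - f x) * Rabs (g x) <= e * Rabs (g x)) by (apply Rmult_le_compat_r; lra).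
  assert (Rabs (f x) * Rabs (g t - g x) <= Rabs (f x) * e) by (apply Rmult_le_compat_l; lra).
  assert (e * e <= e * 1) by (apply Rmult_le_compat_l; lra).
  unfold M in e3. nra. Qed.

Lemma cont_const k x : cont_at (fun _ => k) x.
Proof. intros eps He. exists 1; split; [lra|]. intros. rewrite Rminus_diag, Rabs_R0; auto. Qed.

Lemma cont_comp f g x : cont_at f x -> cont_at g (f x) -> cont_at (fun t => g (f t)) x.
Proof. intros Hf Hg eps He. destruct (Hg eps He) as [d1 [H1 K1]]. destruct (Hf d1 H1) as [d2 [H2 K2]].
  exists d2; split; auto. Qed.

Lemma open1_near U x : open1 U -> U x -> near x U.
Proof. intros H Hx. destruct (H x Hx) as [e [He K]]. exists e; split; auto. Qed.

Lemma curve_d1 U c x : vsmooth1_on U c -> U x -> vder c x (vderive c x).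
Proof. intros [[_ H1] [[_ H2] [_ H3]]] Hx. refine (conj _ (conj _ _)); apply Derive_correct.
  exact (H1 1%nat x Hx). exact (H2 1%nat x Hx). exact (H3 1%nat x Hx). Qed.

Lemma curve_d2 U c x : vsmooth1_on U c -> U x -> vder (vderive c) x (vderive (vderive c) x).
Proof. intros [[_ H1] [[_ H2] [_ H3]]] Hx. refine (conj _ (conj _ _)); apply Derive_correct.
  exact (H1 2%nat x Hx). exact (H2 2%nat x Hx). exact (H3 2%nat x Hx). Qed.

Lemma vsmooth_open U c : vsmooth1_on U c -> open1 U.
Proof. intros [[H _] _]; exact H. Qed.

Lemma opp_loc U (f : R -> R) x n : smooth1_on U f -> U (- x) ->
  locally (- x) (fun y => forall k, (k <= n)%nat -> ex_derive_n f k y).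
Proof. intros [HU Hd] Hx. apply near_locally. destruct (HU _ Hx) as [e [He K]].
  exists e; split; [exact He|]. intros t Ht k _. apply Hd. apply K. exact Ht. Qed.

Lemma opp_d1 U c x : vsmooth1_on U c -> U (- x) ->
  vderive (fun s => c (- s)) x = vscale (-1) (vderive c (- x)).
Proof. intros Hs Hx. destruct Hs as [H1 [H2 H3]]. unfold vderive, vscale, mkv, vx, vy, vz; simpl.
  pose proof (Derive_n_comp_opp (fun s => fst (fst (c s))) 1 x (opp_loc _ _ _ 1 H1 Hx)) as K1.
  pose proof (Derive_n_comp_opp (fun s => snd (fst (c s))) 1 x (opp_loc _ _ _ 1 H2 Hx)) as K2.
  pose proof (Derive_n_comp_opp (fun s => snd (c s)) 1 x (opp_loc _ _ _ 1 H3 Hx)) as K3.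
  simpl in K1, K2, K3. rewrite K1, K2, K3. rewrite !Rmult_1_r. reflexivity. Qed.

Lemma opp_d2 U c x : vsmooth1_on U c -> U (- x) ->
  vderive (vderive (fun s => c (- s))) x = vderive (vderive c) (- x).
Proof. intros Hs Hx. destruct Hs as [H1 [H2 H3]]. unfold vderive, vscale, mkv, vx, vy, vz; simpl.
  pose proof (Derive_n_comp_opp (fun s => fst (fst (c s))) 2 x (opp_loc _ _ _ 2 H1 Hx)) as K1.
  pose proof (Derive_n_comp_opp (fun s => snd (fst (c s))) 2 x (opp_loc _ _ _ 2 H2 Hx)) as K2.
  pose proof (Derive_n_comp_opp (fun s => snd (c s)) 2 x (opp_loc _ _ _ 2 H3 Hx)) as K3.
  simpl in K1, K2, K3. rewrite K1, K2, K3. f_equal; [f_equal|]; ring. Qed.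

Lemma sqd_cont c (D : R -> vec) t (p : vec) : vder c t (D t) ->
  continuity_pt (fun τ => dot (vsub (c τ) p) (vsub (c τ) p)) t.
Proof. intros H. pose proof (vder_sub _ _ t _ _ H (vder_const p t)) as K.
  eapply deriv_cont_pt. apply (d_dot _ _ _ _ _ K K). Qed.

Lemma sep l c (D : R -> vec) : (forall t, Iv l t -> vder c t (D t)) ->
  (forall s t, Iv l s -> Iv l t -> c s = c t -> s = t) ->
  forall t0 eps, Iv l t0 -> 0 < eps -> exists m, 0 < m /\
    forall t, Iv l t -> eps <= Rabs (t - t0) -> m <= dot (vsub (c t) (c t0)) (vsub (c t) (c t0)).
Proof. intros Hd Hinj t0 eps H0 He.
  set (h := fun τ => dot (vsub (c τ) (c t0)) (vsub (c τ) (c t0))).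
  assert (Hc : forall t, Iv l t -> continuity_pt h t) by (intros; eapply sqd_cont; eauto).
  assert (Hpos : forall t, Iv l t -> t <> t0 -> 0 < h t).
  { intros t Ht Hne. destruct (dot_ge0 (vsub (c t) (c t0))) as [?|E]; [exact H|].
    exfalso. apply Hne. apply Hinj; auto. apply vsub_eq0, dot_zero. unfold h in E; auto. }
  assert (P1 : exists m1, 0 < m1 /\ forall t, Iv l t -> t <= t0 - eps -> m1 <= h t).
  { destruct (Rle_lt_dec (-(l/2)) (t0 - eps)) as [Hle|Hlt].
    - destruct (continuity_ab_min h (-(l/2)) (t0 - eps) Hle) as [mx [K1 K2]].
      { intros x Hx; apply Hc; unfold Iv in *; lra. }
      exists (h mx); split. apply Hpos; unfold Iv in *; lra.
      intros t Ht Ht'; apply K1; unfold Iv in *; lra.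
    - exists 1; split; [lra|]. intros t Ht Ht'; unfold Iv in *; lra. }
  assert (P2 : exists m2, 0 < m2 /\ forall t, Iv l t -> t0 + eps <= t -> m2 <= h t).
  { destruct (Rle_lt_dec (t0 + eps) (l/2)) as [Hle|Hlt].
    - destruct (continuity_ab_min h (t0 + eps) (l/2) Hle) as [mx [K1 K2]].
      { intros x Hx; apply Hc; unfold Iv in *; lra. }
      exists (h mx); split. apply Hpos; unfold Iv in *; lra.
      intros t Ht Ht'; apply K1; unfold Iv in *; lra.
    - exists 1; split; [lra|]. intros t Ht Ht'; unfold Iv in *; lra. }
  destruct P1 as [m1 [Hm1 K1]], P2 as [m2 [Hm2 K2]].
  exists (Rmin m1 m2); split; [apply Rmin_glb_lt; auto|].
  intros t Ht Hd'. destruct (Rle_lt_dec t t0).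
  - rewrite Rabs_left1 in Hd' by lra. eapply Rle_trans; [apply Rmin_l|]. apply K1; auto; lra.
  - rewrite Rabs_right in Hd' by lra. eapply Rle_trans; [apply Rmin_r|]. apply K2; auto; lra.
Qed.

Lemma close_pt l c (D : R -> vec) (p : vec) : 0 < l -> (forall t, Iv l t -> vder c t (D t)) ->
  (forall eps, 0 < eps -> exists t, Iv l t /\ dot (vsub (c t) p) (vsub (c t) p) < eps) ->
  exists t, Iv l t /\ p = c t.
Proof. intros Hl Hd H.
  set (h := fun τ => dot (vsub (c τ) p) (vsub (c τ) p)).
  destruct (continuity_ab_min h (-(l/2)) (l/2)) as [mx [K1 K2]]. lra.
  { intros x Hx; eapply sqd_cont; apply Hd; exact Hx. }
  exists mx; split; [exact K2|].
  assert (E : h mx = 0).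
  { apply Rle_antisym; [|apply dot_ge0]. apply Rnot_lt_le. intros Hlt.
    destruct (H (h mx) Hlt) as [t [Ht Ht']]. specialize (K1 t Ht). unfold h in *. lra. }
  symmetry. apply vsub_eq0, dot_zero. exact E. Qed.

Lemma tube l (U : R -> R -> Prop) : open2 U -> (forall s, Iv l s -> U s 0) ->
  exists eps, 0 < eps /\ forall s v, Iv l s -> Rabs v < eps -> U s v.
Proof. intros HU H0.
  assert (Ex : forall t, exists e, 0 < e /\ (Iv l t -> forall u v, Rabs (u - t) < e -> Rabs v < e -> U u v)).
  { intros t. destruct (classic (Iv l t)) as [Ht|Ht].
    - destruct (HU t 0 (H0 t Ht)) as [e [He K]]. exists e; split; auto. intros _ u v Hu Hv.
      apply K; auto. rewrite Rminus_0_r; auto.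
    - exists 1; split; [lra|]. intros; contradiction. }
  set (e0 := fun t => epsilon (inhabits 1) (fun e => 0 < e /\ (Iv l t -> forall u v, Rabs (u - t) < e -> Rabs v < e -> U u v))).
  assert (He0 : forall t, 0 < e0 t /\ (Iv l t -> forall u v, Rabs (u - t) < e0 t -> Rabs v < e0 t -> U u v)).
  { intros t. unfold e0. apply epsilon_spec. apply Ex. }
  set (delta := fun t => mkposreal (e0 t) (proj1 (He0 t))).
  destruct (compactness_value_1d (-(l/2)) (l/2) delta) as [d Hd].
  exists d; split; [apply cond_pos|]. intros s v Hs Hv.
  specialize (Hd s Hs). apply NNPP in Hd. destruct Hd as [t [Ht [K1 K2]]].
  simpl in K1, K2. apply (proj2 (He0 t) Ht); auto. lra. Qed.

Lemma F_du U F u v : vsmooth2_on U F -> U u v -> vder (fun t => F t v) u (pu F u v).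
Proof. intros [[_ H1] [[_ H2] [_ H3]]] Huv. refine (conj _ (conj _ _)); apply Derive_correct.
  exact (proj1 (H1 nil u v Huv)). exact (proj1 (H2 nil u v Huv)). exact (proj1 (H3 nil u v Huv)). Qed.

Lemma gauss_alg fu fv Xp L : cross fu fv <> vzero ->
  (L * dot vzero (vscale (/ vnorm (cross fu fv)) (cross fu fv))
   - dot Xp (vscale (/ vnorm (cross fu fv)) (cross fu fv)) * dot Xp (vscale (/ vnorm (cross fu fv)) (cross fu fv)))
  / (dot fu fu * dot fv fv - dot fu fv * dot fu fv) = 0 -> det3 fu fv Xp = 0.
Proof. intros Hx H. set (X := cross fu fv) in *.
  assert (HXX : 0 < dot X X).
  { destruct (dot_ge0 X) as [?|E]; auto. exfalso; apply Hx. apply dot_zero; auto. }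
  assert (Hden : dot fu fu * dot fv fv - dot fu fv * dot fu fv = dot X X) by (unfold X; vdestr; vunfg; ring).
  rewrite Hden in H.
  assert (Hn : 0 < vnorm X) by (unfold vnorm; apply sqrt_lt_R0; auto).
  assert (E1 : dot vzero (vscale (/ vnorm X) X) = 0) by (vdestr; vunfg; ring).
  assert (E2 : dot Xp (vscale (/ vnorm X) X) = / vnorm X * dot X Xp) by (vdestr; vunfg; ring).
  rewrite E1, E2 in H.
  assert (E3 : (/ vnorm X * dot X Xp) * (/ vnorm X * dot X Xp) = 0).
  { apply (Rmult_eq_compat_r (dot X X)) in H. unfold Rdiv in H.
    rewrite Rmult_assoc, Rinv_l in H by lra. lra. }
  apply Rmult_integral in E3. assert (Hi : / vnorm X <> 0) by (apply Rinv_neq_0_compat; lra).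
  destruct E3 as [E3|E3]; apply Rmult_integral in E3; destruct E3; try contradiction;
  unfold det3; fold X; auto. Qed.

Lemma strip_facts g F U xi s :
  open2 U -> vsmooth2_on U F -> (forall s v, U s v -> cross (pu F s v) (pv F s v) <> vzero) ->
  (forall s v, U s v -> F s v = vadd (g s) (vscale v (xi s))) ->
  (forall s v, U s v -> gauss_curv F s v = 0) -> U s 0 ->
  vder g s (vderive g s) /\ vder xi s (vderive xi s) /\ pv F s 0 = xi s /\
  det3 (vderive g s) (xi s) (vderive xi s) = 0.
Proof. intros HU Hsm Himm Hrep Hgc Hs.
  destruct (HU s 0 Hs) as [e [He Hb]].
  assert (Hb' : forall u v, Rabs (u - s) < e -> Rabs v < e -> U u v).
  { intros u v Hu Hv. apply Hb; auto. rewrite Rminus_0_r; auto. }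
  assert (Hg : vder g s (pu F s 0)).
  { apply (vder_ext_near (fun t => F t 0)); [|exact (F_du U F s 0 Hsm Hs)]. exists e; split; [exact He|]. intros t Ht.
    rewrite Hrep by (apply Hb'; auto; rewrite Rabs_R0; auto). apply vec_ext; vdestr; vunfg; ring. }
  assert (Eg : vderive g s = pu F s 0) by (apply vder_unique; auto).
  set (v0 := e / 2).
  assert (Hv0 : Rabs v0 < e) by (unfold v0; rewrite Rabs_right; lra).
  assert (Hxi : vder xi s (vscale (/ v0) (vsub (pu F s v0) (pu F s 0)))).
  { assert (Hsv0 : U s v0) by (apply Hb'; auto; rewrite Rminus_diag, Rabs_R0; auto).
    apply (vder_ext_near (fun t => vscale (/ v0) (vsub (F t v0) (F t 0)))); 
      [|exact (vder_scal _ _ _ _ (vder_sub _ _ _ _ _ (F_du U F s v0 Hsm Hsv0) (F_du U F s 0 Hsm Hs)))].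
    exists e; split; [exact He|]. intros t Ht.
    rewrite (Hrep t v0), (Hrep t 0) by (apply Hb'; auto; rewrite ?Rabs_R0; auto).
    assert (v0 <> 0) by (unfold v0; lra).
    apply vec_ext; generalize (g t) (xi t); intros; vdestr; vunfg; field; auto. }
  assert (Exi : vderive xi s = vscale (/ v0) (vsub (pu F s v0) (pu F s 0))) by (apply vder_unique; auto).
  assert (Hpv : forall t, Rabs t < e -> pv F s t = xi s).
  { intros t Ht. unfold pv. apply vder_unique. apply (vder_ext_near (fun t' => vadd (g s) (vscale t' (xi s)))); [|apply vder_line].
    exists (e - Rabs t); split; [lra|]. intros t' Ht'. rewrite Hrep; [reflexivity|]. apply Hb'.
    rewrite Rminus_diag, Rabs_R0; auto. 
    replace t' with ((t' - t) + t) by ring. eapply Rle_lt_trans; [apply Rabs_triang|]. lra. }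
  assert (Hpv0 : pv F s 0 = xi s) by (apply Hpv; rewrite Rabs_R0; auto).
  split; [|split; [|split]].
  - rewrite Eg; exact Hg.
  - rewrite Exi; exact Hxi.
  - exact Hpv0.
  -
    assert (Hpvv : pv (pv F) s 0 = vzero).
    { unfold pv at 1. apply vder_unique. apply (vder_ext_near (fun _ => xi s)); [|apply (vder_const (xi s))].
      exists e; split; [exact He|]. intros t Ht. rewrite Hpv; auto. rewrite Rminus_0_r in Ht; auto. }
    assert (Hpu : forall t, Rabs t < e -> pu F s t = vadd (vderive g s) (vscale t (vderive xi s))).
    { intros t Ht. unfold pu. apply vder_unique.
      eapply vder_eqv; [apply (vder_ext_near (fun u => vadd (g u) (vscale t (xi u)))); [|exact (vder_add _ _ _ _ _ Hg (vder_scal t _ _ _ Hxi))]|].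
      - exists e; split; [exact He|]. intros u Hu. rewrite Hrep by (apply Hb'; auto). reflexivity.
      - rewrite Eg, Exi; reflexivity. }
    assert (Hpuv : pv (pu F) s 0 = vderive xi s).
    { unfold pv at 1. apply vder_unique. apply (vder_ext_near (fun t => vadd (vderive g s) (vscale t (vderive xi s)))); [|apply (vder_line (vderive g s) (vderive xi s))].
      exists e; split; [exact He|]. intros t Ht. rewrite Hpu; auto. rewrite Rminus_0_r in Ht; auto. }
    assert (Hpu0 : pu F s 0 = vderive g s) by auto.
    pose proof (Hgc s 0 Hs) as G. pose proof (Himm s 0 Hs) as I.
    unfold gauss_curv in G. cbv zeta in G. rewrite Hpvv, Hpuv, Hpu0, Hpv0 in G.
    rewrite Hpu0, Hpv0 in I.
    eapply gauss_alg; [exact I| exact G].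
Qed.

Lemma cs u w : dot u w * dot u w <= dot u u * dot w w.
Proof. assert (E : dot u u * dot w w - dot u w * dot u w = dot (cross u w) (cross u w)) by (vdestr; vunf; ring).
  pose proof (dot_ge0 (cross u w)). lra. Qed.

Lemma unit_dot_le1 u w : dot u u = 1 -> dot w w = 1 -> Rabs (dot u w) <= 1.
Proof. intros Hu Hw. pose proof (cs u w) as H. rewrite Hu, Hw in H.
  apply Rabs_le. split; nra. Qed.

Lemma comp_le1 u : dot u u = 1 -> Rabs (vx u) <= 1 /\ Rabs (vy u) <= 1 /\ Rabs (vz u) <= 1.
Proof. intros H. pose proof (dot_ge0 u). unfold dot in H.
  repeat split; apply Rabs_le; split; nra. Qed.

Lemma dot_bound u r K : dot u u = 1 -> Rabs (vx r) <= K -> Rabs (vy r) <= K -> Rabs (vz r) <= K ->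
  Rabs (dot u r) <= 3 * K.
Proof. intros Hu H1 H2 H3. destruct (comp_le1 u Hu) as [U1 [U2 U3]]. unfold dot.
  eapply Rle_trans; [apply Rabs_triang|]. eapply Rle_trans; [apply Rplus_le_compat_r; apply Rabs_triang|].
  rewrite !Rabs_mult.
  assert (Rabs (vx u) * Rabs (vx r) <= 1 * K) by (apply Rmult_le_compat; auto using Rabs_pos).
  assert (Rabs (vy u) * Rabs (vy r) <= 1 * K) by (apply Rmult_le_compat; auto using Rabs_pos).
  assert (Rabs (vz u) * Rabs (vz r) <= 1 * K) by (apply Rmult_le_compat; auto using Rabs_pos).
  lra. Qed.

Lemma dot_app_r u f1 f2 f3 r : dot u (app_vec f1 f2 f3 r) = vx r * dot u f1 + vy r * dot u f2 + vz r * dot u f3.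
Proof. vdestr; vunf; ring. Qed.

Lemma dot_app_bound u f1 f2 f3 r K : dot u u = 1 -> ortho f1 f2 f3 ->
  Rabs (vx r) <= K -> Rabs (vy r) <= K -> Rabs (vz r) <= K ->
  Rabs (dot u (app_vec f1 f2 f3 r)) <= 3 * K.
Proof. intros Hu [O1 O2 O3 _ _ _] H1 H2 H3. rewrite dot_app_r.
  pose proof (unit_dot_le1 u f1 Hu O1). pose proof (unit_dot_le1 u f2 Hu O2). pose proof (unit_dot_le1 u f3 Hu O3).
  eapply Rle_trans; [apply Rabs_triang|]. eapply Rle_trans; [apply Rplus_le_compat_r; apply Rabs_triang|].
  rewrite !Rabs_mult.
  assert (Rabs (vx r) * Rabs (dot u f1) <= K * 1) by (apply Rmult_le_compat; auto using Rabs_pos).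
  assert (Rabs (vy r) * Rabs (dot u f2) <= K * 1) by (apply Rmult_le_compat; auto using Rabs_pos).
  assert (Rabs (vz r) * Rabs (dot u f3) <= K * 1) by (apply Rmult_le_compat; auto using Rabs_pos).
  lra. Qed.

Definition rem (f : R -> vec) x D t := vsub (vsub (f t) (f x)) (vscale (t - x) D).

Lemma vder_o f x D : vder f x D -> forall eta, 0 < eta -> exists d, 0 < d /\ forall t, Rabs (t - x) < d ->
  Rabs (vx (rem f x D t)) <= eta * Rabs (t - x) /\ Rabs (vy (rem f x D t)) <= eta * Rabs (t - x) /\
  Rabs (vz (rem f x D t)) <= eta * Rabs (t - x).
Proof. intros [H1 [H2 H3]] eta He.
  destruct (deriv_o _ _ _ H1 eta He) as [d1 [P1 K1]].
  destruct (deriv_o _ _ _ H2 eta He) as [d2 [P2 K2]].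
  destruct (deriv_o _ _ _ H3 eta He) as [d3 [P3 K3]].
  exists (Rmin d1 (Rmin d2 d3)). split. repeat apply Rmin_glb_lt; auto.
  intros t Ht. assert (Rmin d1 (Rmin d2 d3) <= d1) by apply Rmin_l.
  assert (Rmin d1 (Rmin d2 d3) <= d2) by (eapply Rle_trans; [apply Rmin_r|apply Rmin_l]).
  assert (Rmin d1 (Rmin d2 d3) <= d3) by (eapply Rle_trans; [apply Rmin_r|apply Rmin_r]).
  replace (vx (rem f x D t)) with (vx (f t) - vx (f x) - vx D * (t - x)) by (unfold rem; generalize (f t) (f x); intros; vdestr; vunf; ring).
  replace (vy (rem f x D t)) with (vy (f t) - vy (f x) - vy D * (t - x)) by (unfold rem; generalize (f t) (f x); intros; vdestr; vunf; ring).
  replace (vz (rem f x D t)) with (vz (f t) - vz (f x) - vz D * (t - x)) by (unfold rem; generalize (f t) (f x); intros; vdestr; vunf; ring).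
  split; [|split]; [apply K1|apply K2|apply K3]; lra. Qed.

Definition vcont (P : R -> vec) x := cont_at (fun t => vx (P t)) x /\ cont_at (fun t => vy (P t)) x /\ cont_at (fun t => vz (P t)) x.

Lemma cont_ext f g x : (forall t, f t = g t) -> cont_at f x -> cont_at g x.
Proof. intros E H eps He. destruct (H eps He) as [d [Hd K]]. exists d; split; auto. intros; rewrite <- !E; auto. Qed.

Lemma vder_vcont f x D : vder f x D -> vcont f x.
Proof. intros [H1 [H2 H3]]. split; [|split]; eapply deriv_cont; eauto. Qed.

Lemma cont_dot P Q x : vcont P x -> vcont Q x -> cont_at (fun t => dot (P t) (Q t)) x.
Proof. intros [P1 [P2 P3]] [Q1 [Q2 Q3]]. unfold dot.
  apply cont_plus; [apply cont_plus|]; apply cont_mult; auto. Qed.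

Lemma vcont_app f1 f2 f3 b Q x : vcont Q x -> vcont (fun t => vadd b (app_vec f1 f2 f3 (Q t))) x.
Proof. intros [Q1 [Q2 Q3]].
  split; [|split]; (eapply cont_ext; [intros t; symmetry; vunf; reflexivity|]);
  repeat (apply cont_plus || apply cont_mult); auto using cont_const. Qed.

Lemma vcont_comp (P : R -> vec) (g : R -> R) x : cont_at g x -> vcont P (g x) -> vcont (fun t => P (g t)) x.
Proof. intros Hg [P1 [P2 P3]]. split; [|split]; apply (cont_comp g (fun y => _ (P y))); auto. Qed.

Lemma app_sub b f1 f2 f3 p q : vsub (vadd b (app_vec f1 f2 f3 p)) (vadd b (app_vec f1 f2 f3 q)) = app_vec f1 f2 f3 (vsub p q).
Proof. apply vec_ext; vdestr; vunf; ring. Qed.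

Lemma abs_iv l s : Rabs s < l/2 -> Iv l s.
Proof. intros H. destruct (Rabs_def2 _ _ H). unfold Iv; lra. Qed.

Lemma abs_arith a p q h lam eta : a + p = h * lam + q ->
  Rabs p <= 3 * eta * Rabs a -> Rabs q <= 3 * eta * Rabs h -> Rabs lam <= 1 -> 0 < eta -> eta <= 1/12 ->
  Rabs (a - h * lam) <= 9 * eta * Rabs h.
Proof. intros E Hp Hq Hl He He'.
  assert (E1 : a - h * lam = q - p) by lra.
  assert (B1 : Rabs (a - h * lam) <= Rabs q + Rabs p).
  { rewrite E1. unfold Rminus. eapply Rle_trans; [apply Rabs_triang|]. rewrite Rabs_Ropp; lra. }
  assert (B2 : Rabs (h * lam) <= Rabs h) by (rewrite Rabs_mult; pose proof (Rabs_pos h); pose proof (Rabs_pos lam); nra).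
  assert (B3 : Rabs a <= Rabs (h * lam) + Rabs (a - h * lam)).
  { replace a with (h * lam + (a - h * lam)) at 1 by ring. apply Rabs_triang. }
  assert (B4 : Rabs a <= 2 * Rabs h) by (pose proof (Rabs_pos h); pose proof (Rabs_pos a); nra).
  pose proof (Rabs_pos h); nra. Qed.

Lemma psi_deriv l c (E : R -> vec) f1 f2 f3 b (psi : R -> R) s :
  ortho f1 f2 f3 ->
  (forall t, Iv l t -> vder c t (E t)) ->
  (forall t, Iv l t -> dot (E t) (E t) = 1) ->
  (forall t, Iv l t -> Iv l (psi t) /\ c (psi t) = vadd b (app_vec f1 f2 f3 (c t))) ->
  (forall eps, 0 < eps -> exists d, 0 < d /\ forall t, Iv l t -> Rabs (t - s) < d -> Rabs (psi t - psi s) < eps) ->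
  Rabs s < l/2 ->
  is_derive psi s (dot (E (psi s)) (app_vec f1 f2 f3 (E s))).
Proof. intros Ho Hd Hu Hrel Hcont Hs.
  assert (Ivs : Iv l s) by (apply abs_iv; lra).
  destruct (Hrel s Ivs) as [Ivps Rs].
  set (u := E (psi s)). set (E0 := E s). set (lam := dot u (app_vec f1 f2 f3 E0)).
  apply is_derive_Reals. intros eps Heps.
  set (eta := Rmin (1/12) (eps/18)).
  assert (Heta : 0 < eta) by (apply Rmin_glb_lt; lra).
  assert (Heta1 : eta <= 1/12) by apply Rmin_l. assert (Heta2 : eta <= eps/18) by apply Rmin_r.
  destruct (vder_o c (psi s) u (Hd _ Ivps) eta Heta) as [d1 [P1 K1]].
  destruct (vder_o c s E0 (Hd _ Ivs) eta Heta) as [d2 [P2 K2]].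
  destruct (Hcont d1 P1) as [dc [Pc Kc]].
  assert (Pd : 0 < Rmin d2 (Rmin dc (l/2 - Rabs s))) by (repeat apply Rmin_glb_lt; lra).
  exists (mkposreal _ Pd). intros h Hh Hhd. simpl in Hhd.
  assert (Hh2 : Rabs h < d2) by (eapply Rlt_le_trans; [exact Hhd|apply Rmin_l]).
  assert (Hhc : Rabs h < dc) by (eapply Rlt_le_trans; [exact Hhd|eapply Rle_trans; [apply Rmin_r|apply Rmin_l]]).
  assert (Hhl : Rabs h < l/2 - Rabs s) by (eapply Rlt_le_trans; [exact Hhd|eapply Rle_trans; [apply Rmin_r|apply Rmin_r]]).
  set (t := s + h).
  assert (Ivt : Iv l t).
  { unfold t. pose proof (Rabs_triang s h). apply abs_iv. lra. }
  assert (Ets : t - s = h) by (unfold t; ring).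
  destruct (Hrel t Ivt) as [Ivpt Rt].
  assert (HD : Rabs (psi t - psi s) < d1) by (apply Kc; auto; rewrite Ets; auto).
  set (Dl := psi t - psi s).
  destruct (K1 (psi t) HD) as [A1 [A2 A3]]. destruct (K2 t) as [B1 [B2 B3]]; [rewrite Ets; auto|].
  rewrite Ets in B1, B2, B3.
  set (r1 := rem c (psi s) u (psi t)) in *. set (r2 := rem c s E0 t) in *.
  assert (EqV : vadd (vscale Dl u) r1 = vadd (vscale h (app_vec f1 f2 f3 E0)) (app_vec f1 f2 f3 r2)).
  { unfold r1, r2, rem, Dl. rewrite Rt, Rs, <- Ets. 
    generalize (c t) (c s) u E0. intros. apply vec_ext; vdestr; vunf; ring. }
  assert (EqS : Dl + dot u r1 = h * lam + dot u (app_vec f1 f2 f3 r2)).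
  { assert (Huu : dot u u = 1) by (apply Hu; auto).
    assert (X : dot u (vadd (vscale Dl u) r1) = dot u (vadd (vscale h (app_vec f1 f2 f3 E0)) (app_vec f1 f2 f3 r2))) by (rewrite EqV; reflexivity).
    replace (dot u (vadd (vscale Dl u) r1)) with (Dl * dot u u + dot u r1) in X by (vdestr; vunf; ring).
    replace (dot u (vadd (vscale h (app_vec f1 f2 f3 E0)) (app_vec f1 f2 f3 r2))) with (h * lam + dot u (app_vec f1 f2 f3 r2)) in X
      by (unfold lam; generalize (app_vec f1 f2 f3 E0) (app_vec f1 f2 f3 r2); intros; vdestr; vunf; ring).
    rewrite Huu in X. lra. }
  assert (Huu : dot u u = 1) by (apply Hu; auto).
  assert (Bp : Rabs (dot u r1) <= 3 * (eta * Rabs Dl)) by (apply dot_bound; auto).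
  assert (Bq : Rabs (dot u (app_vec f1 f2 f3 r2)) <= 3 * (eta * Rabs h)) by (apply dot_app_bound; auto).
  assert (Bl : Rabs lam <= 1).
  { unfold lam. apply unit_dot_le1; [auto|]. rewrite dot_app by exact Ho. unfold E0; apply Hu; exact Ivs. }
  pose proof (abs_arith Dl _ _ h lam eta EqS ltac:(lra) ltac:(lra) Bl Heta Heta1) as Fin.
  replace (s + h) with t by reflexivity. fold Dl.
  replace (Dl / h - lam) with ((Dl - h * lam) / h) by (field; auto).
  unfold Rdiv. rewrite Rabs_mult, Rabs_inv.
  assert (Hph : 0 < Rabs h) by (apply Rabs_pos_lt; auto).
  apply (Rmult_le_compat_r (/ Rabs h)) in Fin; [|left; apply Rinv_0_lt_compat; auto].
  replace (9 * eta * Rabs h * / Rabs h) with (9 * eta) in Fin by (field; lra). lra.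
Qed.

Lemma vcont_ext P Q x : (forall t, P t = Q t) -> vcont P x -> vcont Q x.
Proof. intros E [H1 [H2 H3]]. split; [|split]; [eapply cont_ext; [|exact H1]|eapply cont_ext; [|exact H2]|eapply cont_ext; [|exact H3]]; intros t; cbv beta; rewrite E; reflexivity. Qed.

Lemma psi_main l c U f1 f2 f3 b :
  0 < l -> vsmooth1_on U c -> (forall s, Iv l s -> U s) ->
  (forall s, Iv l s -> dot (vderive c s) (vderive c s) = 1) ->
  (forall s t, Iv l s -> Iv l t -> c s = c t -> s = t) ->
  ortho f1 f2 f3 ->
  (forall s, Iv l s -> exists t, Iv l t /\ vadd b (app_vec f1 f2 f3 (c s)) = c t) ->
  exists lam0, (lam0 = 1 \/ lam0 = -1) /\ forall s, Iv l s -> vadd b (app_vec f1 f2 f3 (c s)) = c (lam0 * s).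
Proof. intros Hl Hsm HU Hunit Hinj Ho HC.
  set (E := vderive c).
  assert (HdE : forall t, Iv l t -> vder c t (E t)) by (intros; eapply curve_d1; eauto).
  assert (HdE2 : forall t, Iv l t -> vder E t (vderive E t)) by (intros; eapply curve_d2; eauto).
  set (psi := fun s => epsilon (inhabits 0) (fun t => Iv l t /\ vadd b (app_vec f1 f2 f3 (c s)) = c t)).
  assert (Hrel : forall s, Iv l s -> Iv l (psi s) /\ c (psi s) = vadd b (app_vec f1 f2 f3 (c s))).
  { intros s Hs. assert (K := epsilon_spec (inhabits 0) (fun t => Iv l t /\ vadd b (app_vec f1 f2 f3 (c s)) = c t) (HC s Hs)).
    fold (psi s) in K. destruct K as [K1 K2]; split; auto. }
  assert (Hdist : forall s t, Iv l s -> Iv l t ->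
     dot (vsub (c (psi t)) (c (psi s))) (vsub (c (psi t)) (c (psi s))) = dot (vsub (c t) (c s)) (vsub (c t) (c s))).
  { intros s t Hs Ht. rewrite (proj2 (Hrel s Hs)), (proj2 (Hrel t Ht)), app_sub, dot_app; auto. }
  assert (Hcont : forall s, Iv l s -> forall eps, 0 < eps -> exists d, 0 < d /\
            forall t, Iv l t -> Rabs (t - s) < d -> Rabs (psi t - psi s) < eps).
  { intros s Hs eps He. destruct (sep l c E HdE Hinj (psi s) eps (proj1 (Hrel s Hs)) He) as [m [Hm Km]].
    pose proof (vder_sub _ _ s _ _ (HdE s Hs) (vder_const (c s) s)) as K.
    destruct (deriv_cont _ _ _ (d_dot _ _ _ _ _ K K) m Hm) as [d [Hd Kd]].
    exists d; split; auto. intros t Ht Hts. apply Rnot_le_lt. intros Hge.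
    specialize (Km (psi t) (proj1 (Hrel t Ht)) Hge). rewrite Hdist in Km; auto.
    specialize (Kd t Hts). cbv beta in Kd.
    replace (dot (vsub (c s) (c s)) (vsub (c s) (c s))) with 0 in Kd by (generalize (c s); intros; vdestr; vunf; ring).
    rewrite Rminus_0_r in Kd. pose proof (dot_ge0 (vsub (c t) (c s))). rewrite Rabs_right in Kd by lra. lra. }
  set (lam := fun s => dot (E (psi s)) (app_vec f1 f2 f3 (E s))).
  assert (Hder : forall s, Rabs s < l/2 -> is_derive psi s (lam s)).
  { intros s Hs. apply (psi_deriv l c E f1 f2 f3 b psi s Ho HdE); auto.
    apply Hcont. apply abs_iv; auto. }
  assert (Hpc : forall s, Rabs s < l/2 -> cont_at psi s).
  { intros s Hs eps He. destruct (Hcont s (abs_iv _ _ Hs) eps He) as [d [Hd K]].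
    exists (Rmin d (l/2 - Rabs s)); split; [apply Rmin_glb_lt; lra|].
    intros t Ht. apply K. apply abs_iv. pose proof (Rmin_r d (l/2 - Rabs s)).
    replace t with ((t - s) + s) by ring. pose proof (Rabs_triang (t - s) s). lra.
    eapply Rlt_le_trans; [exact Ht|apply Rmin_l]. }
  assert (Hlam2 : forall s, Rabs s < l/2 -> lam s * lam s = 1).
  { intros s Hs.
    assert (Hs' : Iv l s) by (apply abs_iv; auto).
    assert (Nr : near s (fun t => c (psi t) = vadd b (app_vec f1 f2 f3 (c t)))).
    { exists (l/2 - Rabs s); split; [lra|]. intros t Ht. apply Hrel. apply abs_iv.
      replace t with ((t - s) + s) by ring. pose proof (Rabs_triang (t - s) s). lra. }
    destruct (Hrel s Hs') as [Ivp _].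
    destruct (HdE (psi s) Ivp) as [D1 [D2 D3]].
    assert (V1 : vder (fun t => c (psi t)) s (vscale (lam s) (E (psi s)))).
    { refine (conj _ (conj _ _)).
      exact (is_derive_comp (fun y => vx (c y)) psi s _ _ D1 (Hder s Hs)).
      exact (is_derive_comp (fun y => vy (c y)) psi s _ _ D2 (Hder s Hs)).
      exact (is_derive_comp (fun y => vz (c y)) psi s _ _ D3 (Hder s Hs)). }
    pose proof (vder_ext_near _ _ _ _ Nr V1) as V1'.
    pose proof (vder_app f1 f2 f3 b c s _ (HdE s Hs')) as V2.
    pose proof (vder_unique _ _ _ V1') as U1. pose proof (vder_unique _ _ _ V2) as U2.
    rewrite U1 in U2.
    assert (X : dot (vscale (lam s) (E (psi s))) (vscale (lam s) (E (psi s))) =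
                dot (app_vec f1 f2 f3 (E s)) (app_vec f1 f2 f3 (E s))) by (rewrite U2; reflexivity).
    rewrite dot_app in X by exact Ho.
    replace (dot (vscale (lam s) (E (psi s))) (vscale (lam s) (E (psi s)))) with (lam s * lam s * dot (E (psi s)) (E (psi s))) in X
      by (generalize (E (psi s)); intros; vdestr; vunf; ring).
    unfold E in X. rewrite !Hunit in X; auto. lra. }
  assert (Hlamc : forall s, Rabs s < l/2 -> cont_at lam s).
  { intros s Hs. assert (Hs' : Iv l s) by (apply abs_iv; auto). unfold lam. apply cont_dot.
    - apply vcont_comp; [apply Hpc; auto|]. eapply vder_vcont. apply HdE2. apply Hrel; auto.
    - eapply vcont_ext; [|apply (vcont_app f1 f2 f3 vzero E s); eapply vder_vcont; apply HdE2; auto].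
      intros t; apply vec_ext; generalize (E t); intros; vdestr; vunf; ring. }
  set (l0 := lam 0).
  assert (H0i : Rabs 0 < l/2) by (rewrite Rabs_R0; lra).
  assert (Hl0 : l0 * l0 = 1) by (apply Hlam2; auto).
  assert (Hconst : forall t, Rabs t < l/2 -> lam t = l0).
  { intros t Ht. pose proof (Hlam2 t Ht) as Ht2.
    destruct (Req_dec (lam t) l0) as [E1|Hne]; auto. exfalso.
    assert (E2 : lam t = - l0) by nra.
    destruct (Rtotal_order t 0) as [Hneg|[Hz|Hpos]].
    - destruct (Ranalysis5.IVT_interv (fun x => lam x * l0) t 0) as [z [Hz1 Hz2]].
      + intros a Ha. apply cont_at_pt. apply cont_mult; [apply Hlamc|apply cont_const].
        rewrite Rabs_left1 by lra. rewrite Rabs_left in Ht by lra. lra.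
      + exact Hneg.
      + rewrite E2. nra.
      + fold l0. nra.
      + assert (Rabs z < l/2) by (rewrite Rabs_left1 by lra; rewrite Rabs_left in Ht by lra; lra).
        pose proof (Hlam2 z H). nra.
    - subst t. fold l0 in Hne. contradiction.
    - destruct (Ranalysis5.IVT_interv (fun x => lam x * - l0) 0 t) as [z [Hz1 Hz2]].
      + intros a Ha. apply cont_at_pt. apply cont_mult; [apply Hlamc|apply cont_const].
        rewrite Rabs_right by lra. rewrite Rabs_right in Ht by lra. lra.
      + exact Hpos.
      + fold l0. nra.
      + rewrite E2. nra.
      + assert (Rabs z < l/2) by (rewrite Rabs_right by lra; rewrite Rabs_right in Ht by lra; lra).
        pose proof (Hlam2 z H). nra. }
  assert (Hlin : forall t, Rabs t < l/2 -> psi t = l0 * t + psi 0).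
  { intros t Ht.
    assert (Hin : forall x, Rmin 0 t <= x <= Rmax 0 t -> Rabs x < l/2).
    { intros x Hx. unfold Rmin, Rmax in Hx. destruct (Rle_dec 0 t).
      - rewrite Rabs_right by lra. rewrite Rabs_right in Ht by lra. lra.
      - rewrite Rabs_left1 by lra. rewrite Rabs_left in Ht by lra. lra. }
    assert (Hd' : forall x, Rabs x < l/2 -> is_derive (fun y => psi y - l0 * y) x 0).
    { intros x Hx. eapply d_eqv. apply d_minus; [apply Hder; auto| apply d_scal; apply d_id].
      rewrite Hconst; auto; ring. }
    destruct (MVT_gen (fun y => psi y - l0 * y) 0 t (fun _ => 0)) as [z [Hz Hz2]].
    + intros x Hx. apply Hd'. apply Hin; lra.
    + intros x Hx. eapply deriv_cont_pt. apply Hd'. apply Hin; auto.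
    + cbv beta in Hz2. lra. }
  set (k := psi 0) in *.
  assert (Hl0' : l0 = 1 \/ l0 = -1).
  { assert ((l0 - 1) * (l0 + 1) = 0) by nra. apply Rmult_integral in H. destruct H; [left|right]; lra. }
  assert (Hall : forall t, Iv l t -> psi t = l0 * t + k).
  { intros t Ht. destruct (Rlt_le_dec (Rabs t) (l/2)) as [Hi|Hb]; [apply Hlin; auto|].
    assert (Hat : Rabs t = l/2) by (unfold Iv in Ht; apply Rle_antisym; auto; apply Rabs_le; lra).
    apply Rminus_diag_uniq. apply Rabs_eq_0. apply Rle_antisym; [|apply Rabs_pos].
    apply Rnot_lt_le. intros HD.
    set (D := Rabs (psi t - (l0 * t + k))) in *.
    destruct (Hcont t Ht (D/2)) as [d [Hd Kd]]; [lra|].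
    set (m := Rmin d (Rmin (D/2) l)).
    assert (Hm : 0 < m) by (repeat apply Rmin_glb_lt; lra).
    assert (Hm1 : m <= d) by apply Rmin_l.
    assert (Hm2 : m <= D/2) by (eapply Rle_trans; [apply Rmin_r|apply Rmin_l]).
    assert (Hm3 : m <= l) by (eapply Rle_trans; [apply Rmin_r|apply Rmin_r]).
    set (t' := t - t * m / l).
    assert (Et : Rabs (t' - t) = m / 2).
    { unfold t'. replace (t - t * m / l - t) with (- (t * (m / l))) by (field; lra).
      rewrite Rabs_Ropp, Rabs_mult, Hat. rewrite (Rabs_right (m / l)) by (apply Rle_ge, Rdiv_le_0_compat; lra).
      field; lra. }
    assert (Et' : Rabs t' < l/2).
    { unfold t'. replace (t - t * m / l) with (t * (1 - m / l)) by (field; lra).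
      rewrite Rabs_mult, Hat. rewrite Rabs_right.
      - assert (0 < m / l) by (apply Rdiv_lt_0_compat; lra). nra.
      - apply Rle_ge. assert (m / l <= 1). { unfold Rdiv. apply (Rmult_le_reg_r l); [lra|]. rewrite Rmult_assoc, Rinv_l by lra. lra. } lra. }
    assert (K1 : Rabs (psi t' - psi t) < D / 2) by (apply Kd; [apply abs_iv; auto| lra]).
    rewrite (Hlin t' Et') in K1. fold k in K1.
    assert (K2 : D <= Rabs (psi t - (l0 * t' + k)) + Rabs (l0 * (t' - t))).
    { unfold D. replace (psi t - (l0 * t + k)) with ((psi t - (l0 * t' + k)) + l0 * (t' - t)) by ring.
      apply Rabs_triang. }
    rewrite Rabs_mult, Et in K2. rewrite <- Rabs_Ropp in K1.
    replace (- (l0 * t' + k - psi t)) with (psi t - (l0 * t' + k)) in K1 by ring.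
    assert (Habs : Rabs l0 = 1) by (destruct Hl0' as [E0|E0]; rewrite E0; [apply Rabs_R1| rewrite Rabs_left; lra]).
    rewrite Habs in K2. lra. }
  assert (Hk : k = 0).
  { assert (I1 : Iv l (l/2)) by (unfold Iv; lra). assert (I2 : Iv l (-(l/2))) by (unfold Iv; lra).
    pose proof (proj1 (Hrel _ I1)) as J1. pose proof (proj1 (Hrel _ I2)) as J2.
    rewrite Hall in J1, J2 by auto. unfold Iv in J1, J2. destruct Hl0' as [-> | ->]; lra. }
  exists l0; split; auto. intros s Hs. rewrite <- (proj2 (Hrel s Hs)), Hall, Hk by auto. f_equal; ring.
Qed.

Lemma fix_id l c f1 f2 f3 b :
  (~ exists (m : vec) (d : R), m <> vzero /\ forall s, Iv l s -> dot m (c s) = d) -> Iv l 0 ->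
  (forall s, Iv l s -> vadd b (app_vec f1 f2 f3 (c s)) = c s) -> forall p, vadd b (app_vec f1 f2 f3 p) = p.
Proof. intros Hnp H0 Hfix.
  assert (Row : forall m : vec, forall d, (forall s, Iv l s -> dot m (c s) = d) -> m = vzero).
  { intros m d Hm. apply NNPP. intros Hne. apply Hnp. exists m, d. split; auto. }
  assert (Rx : mkv (vx f1 - 1) (vx f2) (vx f3) = vzero).
  { apply (Row _ (- vx b)). intros s Hs. specialize (Hfix s Hs). apply (f_equal vx) in Hfix.
    revert Hfix. generalize (c s). intros. vdestr; vunf. lra. }
  assert (Ry : mkv (vy f1) (vy f2 - 1) (vy f3) = vzero).
  { apply (Row _ (- vy b)). intros s Hs. specialize (Hfix s Hs). apply (f_equal vy) in Hfix.
    revert Hfix. generalize (c s). intros. vdestr; vunf. lra. }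
  assert (Rz : mkv (vz f1) (vz f2) (vz f3 - 1) = vzero).
  { apply (Row _ (- vz b)). intros s Hs. specialize (Hfix s Hs). apply (f_equal vz) in Hfix.
    revert Hfix. generalize (c s). intros. vdestr; vunf. lra. }
  pose proof (Hfix 0 H0) as Hb. revert Hb. generalize (c 0). intros c0 Hb p.
  vdestr; vunf. injection Rx; injection Ry; injection Rz; intros.
  injection Hb; intros. f_equal; [f_equal|]; nra. Qed.

Lemma triple_id p q r y : vscale (det3 p q r) y =
  vadd (vadd (vscale (dot p y) (cross q r)) (vscale (dot q y) (cross r p))) (vscale (dot r y) (cross p q)).
Proof. apply vec_ext; vdestr; vunf; ring. Qed.

Lemma frame_zero E N y : dot E E = 1 -> dot N N = 1 -> dot E N = 0 ->
  dot E y = 0 -> dot N y = 0 -> det3 E N y = 0 -> y = vzero.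
Proof. intros H1 H2 H3 H4 H5 H6. pose proof (triple_id E N (cross E N) y) as T.
  assert (D : det3 E N (cross E N) = 1).
  { replace (det3 E N (cross E N)) with (dot E E * dot N N - dot E N * dot E N) by (vdestr; vunf; ring).
    rewrite H1, H2, H3; ring. }
  assert (D2 : dot (cross E N) y = det3 E N y) by reflexivity.
  rewrite D, H4, H5, D2, H6 in T. 
  replace y with (vscale 1 y) by (apply vec_ext; vdestr; vunf; ring). rewrite T.
  apply vec_ext; vdestr; vunf; ring. Qed.

Lemma curv_sq g s : curv g s * curv g s = dot (vderive (vderive g) s) (vderive (vderive g) s).
Proof. unfold curv, vnorm. rewrite sqrt_sqrt; auto using dot_ge0. Qed.

Lemma pn_unit g s : 0 < curv g s -> dot (pnormal g s) (pnormal g s) = 1.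
Proof. intros H. pose proof (curv_sq g s) as E. unfold pnormal.
  replace (dot (vscale (/ curv g s) (vderive (vderive g) s)) (vscale (/ curv g s) (vderive (vderive g) s)))
    with (/ curv g s * / curv g s * dot (vderive (vderive g) s) (vderive (vderive g) s))
    by (generalize (vderive (vderive g) s); intros; vdestr; vunf; ring).
  rewrite <- E. field. lra. Qed.

Lemma c2_eq g s : 0 < curv g s -> vderive (vderive g) s = vscale (curv g s) (pnormal g s).
Proof. intros H. unfold pnormal. generalize (vderive (vderive g) s). intros. apply vec_ext; vdestr; vunf; field; lra. Qed.

Lemma en_orth l c U s : vsmooth1_on U c -> (forall t, Iv l t -> U t) ->
  (forall t, Iv l t -> dot (vderive c t) (vderive c t) = 1) -> Rabs s < l/2 ->
  dot (vderive c s) (vderive (vderive c) s) = 0.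
Proof. intros Hsm HU Hu Hs.
  assert (Ivs : Iv l s) by (apply abs_iv; auto).
  pose proof (curve_d2 U c s Hsm (HU s Ivs)) as D2.
  pose proof (d_dot _ _ _ _ _ D2 D2) as K.
  assert (K2 : is_derive (fun t => dot (vderive c t) (vderive c t)) s 0).
  { eapply d_ext_near; [|apply (d_const 1)]. exists (l/2 - Rabs s); split; [lra|].
    intros t Ht. symmetry. apply Hu. apply abs_iv. replace t with ((t - s) + s) by ring.
    pose proof (Rabs_triang (t - s) s). lra. }
  pose proof (is_derive_unique _ _ _ K) as U1. pose proof (is_derive_unique _ _ _ K2) as U2.
  rewrite U1 in U2. rewrite (dot_comm (vderive (vderive c) s)) in U2. lra. Qed.

Lemma tn_orth l c U s : vsmooth1_on U c -> (forall t, Iv l t -> U t) ->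
  (forall t, Iv l t -> dot (vderive c t) (vderive c t) = 1) -> Rabs s < l/2 ->
  dot (tangent c s) (pnormal c s) = 0.
Proof. intros. unfold tangent, pnormal. 
  replace (dot (vderive c s) (vscale (/ curv c s) (vderive (vderive c) s))) with
    (/ curv c s * dot (vderive c s) (vderive (vderive c) s)) by (generalize (vderive c s) (vderive (vderive c) s); intros; vdestr; vunf; ring).
  erewrite en_orth; eauto. ring. Qed.

Lemma app_lin f1 f2 f3 p q a : app_vec f1 f2 f3 (vadd (vscale a p) q) = vadd (vscale a (app_vec f1 f2 f3 p)) (app_vec f1 f2 f3 q).
Proof. apply vec_ext; vdestr; vunf; ring. Qed.

Lemma app_scale f1 f2 f3 p a : app_vec f1 f2 f3 (vscale a p) = vscale a (app_vec f1 f2 f3 p).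
Proof. apply vec_ext; vdestr; vunf; ring. Qed.

Lemma app_add f1 f2 f3 p q : app_vec f1 f2 f3 (vadd p q) = vadd (app_vec f1 f2 f3 p) (app_vec f1 f2 f3 q).
Proof. apply vec_ext; vdestr; vunf; ring. Qed.

Lemma dot_bound_gen q r K : 0 <= K -> Rabs (vx r) <= K -> Rabs (vy r) <= K -> Rabs (vz r) <= K ->
  Rabs (dot q r) <= (Rabs (vx q) + Rabs (vy q) + Rabs (vz q)) * K.
Proof. intros HK H1 H2 H3. unfold dot.
  eapply Rle_trans; [apply Rabs_triang|]. eapply Rle_trans; [apply Rplus_le_compat_r; apply Rabs_triang|].
  rewrite !Rabs_mult.
  assert (Rabs (vx q) * Rabs (vx r) <= Rabs (vx q) * K) by (apply Rmult_le_compat_l; auto using Rabs_pos).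
  assert (Rabs (vy q) * Rabs (vy r) <= Rabs (vy q) * K) by (apply Rmult_le_compat_l; auto using Rabs_pos).
  assert (Rabs (vz q) * Rabs (vz r) <= Rabs (vz q) * K) by (apply Rmult_le_compat_l; auto using Rabs_pos).
  lra. Qed.

Lemma AL (l : R) (G X : R -> vec) (et w q : vec) (d0 : R) :
  vder G 0 et -> dot et et = 1 -> vcont X 0 ->
  (forall s, Iv l s -> dot (X s) (X s) = 1) -> dot w w = 1 ->
  (forall eps, 0 < eps -> exists m, 0 < m /\ forall s, Iv l s -> eps <= Rabs s ->
      m <= dot (vsub (G s) (G 0)) (vsub (G s) (G 0))) ->
  dot q et = 0 -> dot q (X 0) = 0 -> 0 < d0 ->
  (forall v, 0 < Rabs v -> Rabs v < d0 -> exists s om, Iv l s /\ Rabs om < 2 * Rabs v /\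
      vadd (G 0) (vscale v w) = vadd (G s) (vscale om (X s))) ->
  dot q w = 0.
Proof. intros HG Het HX HXu Hw Hsep Hqe Hqx Hd0 Hpt.
  set (Q1 := Rabs (vx q) + Rabs (vy q) + Rabs (vz q)).
  assert (HQ1 : 0 <= Q1) by (unfold Q1; pose proof (Rabs_pos (vx q)); pose proof (Rabs_pos (vy q)); pose proof (Rabs_pos (vz q)); lra).
  assert (Key : forall eta, 0 < eta -> eta <= 1/12 -> Rabs (dot q w) <= 6 * Q1 * eta).
  { intros eta He He'.
    destruct (vder_o G 0 et HG eta He) as [d1 [P1 K1]].
    destruct HX as [X1 [X2 X3]].
    destruct (X1 eta He) as [dx [Px Kx]]. destruct (X2 eta He) as [dy [Py Ky]]. destruct (X3 eta He) as [dz [Pz Kz]].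
    set (e' := Rmin d1 (Rmin dx (Rmin dy dz))).
    assert (He0 : 0 < e') by (repeat apply Rmin_glb_lt; auto).
    assert (E1 : e' <= d1) by apply Rmin_l.
    assert (E2 : e' <= dx) by (eapply Rle_trans; [apply Rmin_r|apply Rmin_l]).
    assert (E3 : e' <= dy) by (eapply Rle_trans; [apply Rmin_r|eapply Rle_trans; [apply Rmin_r|apply Rmin_l]]).
    assert (E4 : e' <= dz) by (eapply Rle_trans; [apply Rmin_r|eapply Rle_trans; [apply Rmin_r|apply Rmin_r]]).
    destruct (Hsep e' He0) as [m [Hm Km]].
    set (v := Rmin (d0/2) (Rmin 1 (m/18))).
    assert (Hv : 0 < v) by (repeat apply Rmin_glb_lt; lra).
    assert (Hv1 : v <= d0/2) by apply Rmin_l.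
    assert (Hv2 : v <= 1) by (eapply Rle_trans; [apply Rmin_r|apply Rmin_l]).
    assert (Hv3 : v <= m/18) by (eapply Rle_trans; [apply Rmin_r|apply Rmin_r]).
    assert (Hav : Rabs v = v) by (apply Rabs_right; lra).
    destruct (Hpt v) as [s [om [Hs [Hom Heq]]]]; [lra|lra|].
    rewrite Hav in Hom.
    assert (HD : vsub (G s) (G 0) = vsub (vscale v w) (vscale om (X s))).
    { revert Heq. generalize (G s) (G 0) (X s). intros a b0 x Heq. apply vsub_eq0.
      apply (f_equal (fun p => vsub p (vadd b0 (vscale om x)))) in Heq.
      replace (vsub (vadd a (vscale om x)) (vadd b0 (vscale om x))) with (vsub a b0) in Heq by (apply vec_ext; vdestr; vunf; ring).
      rewrite <- Heq. apply vec_ext; vdestr; vunf; ring. }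
    assert (HwX : Rabs (dot w (X s)) <= 1) by (apply unit_dot_le1; auto).
    assert (HDD : dot (vsub (G s) (G 0)) (vsub (G s) (G 0)) < m).
    { rewrite HD.
      replace (dot (vsub (vscale v w) (vscale om (X s))) (vsub (vscale v w) (vscale om (X s))))
        with (v * v * dot w w - 2 * v * om * dot w (X s) + om * om * dot (X s) (X s))
        by (generalize (X s); intros; vdestr; vunf; ring).
      rewrite Hw, HXu by auto.
      assert (B : Rabs (v * om * dot w (X s)) <= v * Rabs om).
      { rewrite !Rabs_mult, Hav. pose proof (Rabs_pos om). assert (0 <= v * Rabs om) by (apply Rmult_le_pos; lra). nra. }
      apply Rabs_le_between in B. 
      assert (om * om <= Rabs om * Rabs om) by (rewrite <- Rabs_mult; apply Rle_abs).
      pose proof (Rabs_pos om). nra. }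
    assert (Hsl : Rabs s < e').
    { apply Rnot_le_lt. intros Hge. specialize (Km s Hs Hge). lra. }
    assert (Hs0 : Rabs (s - 0) < d1) by (rewrite Rminus_0_r; lra).
    destruct (K1 s Hs0) as [R1 [R2 R3]]. rewrite Rminus_0_r in R1, R2, R3.
    set (r := rem G 0 et s) in *.
    assert (Hr : vsub (G s) (G 0) = vadd (vscale s et) r).
    { unfold r, rem. apply vec_ext; generalize (G s) (G 0); intros; vdestr; vunf; ring. }
    assert (EqV : vscale v w = vadd (vadd (vscale s et) r) (vscale om (X s))).
    { rewrite <- Hr, HD. apply vec_ext; generalize (X s); intros; vdestr; vunf; ring. }
    assert (EqE : v * dot et w = s + dot et r + om * dot et (X s)).
    { apply (f_equal (dot et)) in EqV. 
      replace (dot et (vscale v w)) with (v * dot et w) in EqV by (vdestr; vunf; ring).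
      replace (dot et (vadd (vadd (vscale s et) r) (vscale om (X s)))) with (s * dot et et + dot et r + om * dot et (X s)) in EqV
        by (generalize (X s); intros; vdestr; vunf; ring).
      rewrite Het in EqV. lra. }
    assert (EqQ : v * dot q w = dot q r + om * dot q (vsub (X s) (X 0))).
    { apply (f_equal (dot q)) in EqV. 
      replace (dot q (vscale v w)) with (v * dot q w) in EqV by (vdestr; vunf; ring).
      replace (dot q (vadd (vadd (vscale s et) r) (vscale om (X s)))) with (s * dot q et + dot q r + om * dot q (X s)) in EqV
        by (generalize (X s); intros; vdestr; vunf; ring).
      replace (dot q (vsub (X s) (X 0))) with (dot q (X s) - dot q (X 0)) by (generalize (X s) (X 0); intros; vdestr; vunf; ring).
      rewrite Hqe, Hqx in *. lra. }
    assert (Ber : Rabs (dot et r) <= 3 * (eta * Rabs s)) by (apply dot_bound; auto).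
    assert (Bew : Rabs (dot et w) <= 1) by (apply unit_dot_le1; auto).
    assert (Bex : Rabs (dot et (X s)) <= 1) by (apply unit_dot_le1; auto).
    assert (Bs : Rabs s <= 4 * v).
    { assert (Rabs s <= Rabs (v * dot et w) + Rabs (dot et r) + Rabs (om * dot et (X s))).
      { assert (Es : Rabs s = Rabs (v * dot et w - dot et r - om * dot et (X s))) by (f_equal; lra).
        rewrite Es. unfold Rminus. eapply Rle_trans; [apply Rabs_triang|]. rewrite Rabs_Ropp.
        apply Rplus_le_compat_r. eapply Rle_trans; [apply Rabs_triang|]. rewrite Rabs_Ropp. lra. }
      rewrite !Rabs_mult, Hav in H. pose proof (Rabs_pos om). pose proof (Rabs_pos (dot et w)).
      pose proof (Rabs_pos (dot et (X s))).
      assert (v * Rabs (dot et w) <= v) by nra. assert (Rabs om * Rabs (dot et (X s)) <= Rabs om) by nra.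
      assert (eta * Rabs s <= Rabs s / 12) by (pose proof (Rabs_pos s); nra). lra. }
    assert (Bqr : Rabs (dot q r) <= Q1 * (eta * Rabs s)).
    { apply dot_bound_gen; auto. pose proof (Rabs_pos s); nra. }
    assert (Bqx : Rabs (dot q (vsub (X s) (X 0))) <= Q1 * eta).
    { apply dot_bound_gen; [lra| | |]; unfold vsub, mkv, vx, vy, vz; simpl; left;
      [apply Kx|apply Ky|apply Kz]; rewrite Rminus_0_r; lra. }
    assert (Fin : v * Rabs (dot q w) <= v * (6 * Q1 * eta)).
    { rewrite <- Hav, <- Rabs_mult, EqQ, Hav.
      eapply Rle_trans; [apply Rabs_triang|]. rewrite Rabs_mult.
      pose proof (Rabs_pos om). pose proof (Rabs_pos (dot q (vsub (X s) (X 0)))).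
      assert (Rabs om * Rabs (dot q (vsub (X s) (X 0))) <= 2 * v * (Q1 * eta)) by nra.
      assert (Q1 * (eta * Rabs s) <= Q1 * (eta * (4 * v))) by (apply Rmult_le_compat_l; auto; nra).
      nra. }
    apply Rmult_le_reg_l in Fin; auto. }
  destruct (Req_dec (dot q w) 0) as [E|Hne]; auto. exfalso.
  assert (Hpos : 0 < Rabs (dot q w)) by (apply Rabs_pos_lt; auto).
  set (eta := Rmin (1/12) (Rabs (dot q w) / (6 * Q1 + 1))).
  assert (Heta : 0 < eta) by (apply Rmin_glb_lt; [lra|apply Rdiv_lt_0_compat; lra]).
  specialize (Key eta Heta (Rmin_l _ _)).
  assert (eta <= Rabs (dot q w) / (6 * Q1 + 1)) by apply Rmin_r.
  assert (6 * Q1 * eta < Rabs (dot q w)).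
  { apply (Rmult_le_compat_l (6 * Q1 + 1)) in H; [|lra].
    replace ((6 * Q1 + 1) * (Rabs (dot q w) / (6 * Q1 + 1))) with (Rabs (dot q w)) in H by (field; lra). nra. }
  lra.
Qed.

Definition fvec (e n : vec) (cb sb ca sa : R) : vec :=
  vadd (vscale cb e) (vscale sb (vadd (vscale ca n) (vscale sa (cross e n)))).

Lemma frame_dots e n cb sb ca sa : dot e e = 1 -> dot n n = 1 -> dot e n = 0 ->
  dot n (fvec e n cb sb ca sa) = sb * ca /\ det3 e n (fvec e n cb sb ca sa) = sb * sa /\
  dot e (fvec e n cb sb ca sa) = cb /\ dot (cross e n) (fvec e n cb sb ca sa) = sb * sa.
Proof. intros H1 H2 H3. unfold fvec.
  assert (Hcc : dot (cross e n) (cross e n) = 1).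
  { replace (dot (cross e n) (cross e n)) with (dot e e * dot n n - dot e n * dot e n) by (vdestr; vunf; ring).
    rewrite H1, H2, H3; ring. }
  split; [|split; [|split]].
  - replace (dot n (vadd (vscale cb e) (vscale sb (vadd (vscale ca n) (vscale sa (cross e n))))))
      with (cb * dot e n + sb * (ca * dot n n + sa * 0)) by (vdestr; vunf; ring). rewrite H2, H3; ring.
  - unfold det3. replace (dot (cross e n) (vadd (vscale cb e) (vscale sb (vadd (vscale ca n) (vscale sa (cross e n))))))
      with (cb * 0 + sb * (ca * 0 + sa * dot (cross e n) (cross e n))) by (vdestr; vunf; ring). rewrite Hcc; ring.
  - replace (dot e (vadd (vscale cb e) (vscale sb (vadd (vscale ca n) (vscale sa (cross e n))))))
      with (cb * dot e e + sb * (ca * dot e n + sa * 0)) by (vdestr; vunf; ring). rewrite H1, H3; ring.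
  - replace (dot (cross e n) (vadd (vscale cb e) (vscale sb (vadd (vscale ca n) (vscale sa (cross e n))))))
      with (cb * 0 + sb * (ca * 0 + sa * dot (cross e n) (cross e n))) by (vdestr; vunf; ring). rewrite Hcc; ring. Qed.

Definition fangle (l : R) (g : R -> vec) (F : R -> R -> vec) (alpha beta : R -> R) : Prop :=
  forall s, Iv l s ->
    0 < Rabs (alpha s) < PI / 2 /\ 0 < beta s < PI /\
    pv F s 0 = vadd (vscale (cos (beta s)) (tangent g s))
                    (vscale (sin (beta s))
                       (vadd (vscale (cos (alpha s)) (pnormal g s))
                             (vscale (sin (alpha s)) (binormal g s)))).

Lemma cross_app f1 f2 f3 e n : ortho f1 f2 f3 -> det3 f1 f2 f3 = 1 ->
  dot e e = 1 -> dot n n = 1 -> dot e n = 0 ->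
  app_vec f1 f2 f3 (cross e n) = cross (app_vec f1 f2 f3 e) (app_vec f1 f2 f3 n).
Proof. intros Ho Hd He Hn Hen.
  set (A := app_vec f1 f2 f3).
  assert (HE : dot (A e) (A e) = 1) by (unfold A; rewrite dot_app; auto).
  assert (HN : dot (A n) (A n) = 1) by (unfold A; rewrite dot_app; auto).
  assert (HEN : dot (A e) (A n) = 0) by (unfold A; rewrite dot_app; auto).
  apply vsub_eq0. apply (frame_zero (A e) (A n)); auto.
  - replace (dot (A e) (vsub (A (cross e n)) (cross (A e) (A n)))) with (dot (A e) (A (cross e n)) - 0)
      by (generalize (A e) (A n) (A (cross e n)); intros; vdestr; vunf; ring).
    unfold A; rewrite dot_app by auto. vdestr; vunf; ring.
  - replace (dot (A n) (vsub (A (cross e n)) (cross (A e) (A n)))) with (dot (A n) (A (cross e n)) - 0)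
      by (generalize (A e) (A n) (A (cross e n)); intros; vdestr; vunf; ring).
    unfold A; rewrite dot_app by auto. vdestr; vunf; ring.
  - replace (det3 (A e) (A n) (vsub (A (cross e n)) (cross (A e) (A n))))
      with (det3 (A e) (A n) (A (cross e n)) - (dot (A e) (A e) * dot (A n) (A n) - dot (A e) (A n) * dot (A e) (A n)))
      by (generalize (A e) (A n) (A (cross e n)); intros; vdestr; vunf; ring).
    rewrite HE, HN, HEN. unfold A; rewrite det_app, Hd.
    replace (det3 e n (cross e n)) with (dot e e * dot n n - dot e n * dot e n) by (vdestr; vunf; ring).
    rewrite He, Hn, Hen. ring. Qed.

Lemma fvec_app f1 f2 f3 e n cb sb ca sa : ortho f1 f2 f3 -> det3 f1 f2 f3 = 1 ->
  dot e e = 1 -> dot n n = 1 -> dot e n = 0 ->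
  app_vec f1 f2 f3 (fvec e n cb sb ca sa) = fvec (app_vec f1 f2 f3 e) (app_vec f1 f2 f3 n) cb sb ca sa.
Proof. intros. unfold fvec. rewrite <- cross_app by auto. apply vec_ext; vdestr; vunf; ring. Qed.

Lemma fvec_dot E N c1 s1 c2 s2 ca sa : dot E E = 1 -> dot N N = 1 -> dot E N = 0 ->
  dot (fvec E N c1 s1 ca sa) (fvec E N c2 s2 ca sa) = c1 * c2 + s1 * s2 * (ca * ca + sa * sa).
Proof. intros H1 H2 H3. unfold fvec.
  set (u := cross E N).
  assert (Hu : dot u u = 1).
  { unfold u. replace (dot (cross E N) (cross E N)) with (dot E E * dot N N - dot E N * dot E N) by (vdestr; vunf; ring).
    rewrite H1, H2, H3; ring. }
  assert (HEu : dot E u = 0) by (unfold u; vdestr; vunf; ring).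
  assert (HNu : dot N u = 0) by (unfold u; vdestr; vunf; ring).
  replace (dot (vadd (vscale c1 E) (vscale s1 (vadd (vscale ca N) (vscale sa u))))
               (vadd (vscale c2 E) (vscale s2 (vadd (vscale ca N) (vscale sa u)))))
    with (c1 * c2 * dot E E + (c1 * s2 + s1 * c2) * (ca * dot E N + sa * dot E u)
          + s1 * s2 * (ca * ca * dot N N + sa * sa * dot u u + 2 * ca * sa * dot N u))
    by (clearbody u; vdestr; vunf; ring).
  rewrite H1, H2, H3, Hu, HEu, HNu. ring. Qed.

Lemma lim_eq (P Q : R -> vec) s : vcont P s -> vcont Q s ->
  (forall eps, 0 < eps -> exists t, Rabs (t - s) < eps /\ P t = Q t) -> P s = Q s.
Proof. intros [P1 [P2 P3]] [Q1 [Q2 Q3]] H.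
  assert (G : forall (f g : R -> R), cont_at f s -> cont_at g s -> (forall t, P t = Q t -> f t = g t) -> f s = g s).
  { intros f g Hf Hg Hfg. apply Rminus_diag_uniq. apply Rabs_eq_0. apply Rle_antisym; [|apply Rabs_pos].
    apply Rnot_lt_le. intros Hp. set (D := Rabs (f s - g s)) in *.
    destruct (Hf (D/2)) as [d1 [H1 K1]]; [lra|]. destruct (Hg (D/2)) as [d2 [H2 K2]]; [lra|].
    destruct (H (Rmin d1 d2)) as [t [Ht E]]; [apply Rmin_glb_lt; auto|].
    assert (A1 : Rabs (t - s) < d1) by (eapply Rlt_le_trans; [exact Ht|apply Rmin_l]).
    assert (A2 : Rabs (t - s) < d2) by (eapply Rlt_le_trans; [exact Ht|apply Rmin_r]).
    specialize (K1 t A1). specialize (K2 t A2). rewrite (Hfg t E) in K1.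
    assert (D <= Rabs (g t - f s) + Rabs (g t - g s)).
    { unfold D. replace (f s - g s) with (- (g t - f s) + (g t - g s)) by ring.
      eapply Rle_trans; [apply Rabs_triang|]. rewrite Rabs_Ropp. lra. }
    lra. }
  apply vec_ext; [apply (G (fun t => vx (P t)) (fun t => vx (Q t)))|apply (G (fun t => vy (P t)) (fun t => vy (Q t)))|
    apply (G (fun t => vz (P t)) (fun t => vz (Q t)))]; auto; intros t E; rewrite E; reflexivity. Qed.

Lemma alpha_eq a1 a2 : 0 < Rabs a1 < PI/2 -> 0 < Rabs a2 < PI/2 -> (0 < a1 <-> 0 < a2) -> cos a1 = cos a2 -> a1 = a2.
Proof. intros H1 H2 Hs Hc.
  assert (C : forall a, cos (Rabs a) = cos a).
  { intros a. destruct (Rcase_abs a); [rewrite Rabs_left by lra; apply cos_neg| rewrite Rabs_right by lra; reflexivity]. }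
  assert (E : Rabs a1 = Rabs a2).
  { pose proof PI_RGT_0. apply cos_inj; try lra. rewrite !C; auto. }
  assert (a1 <> 0) by (intros Z; rewrite Z, Rabs_R0 in H1; lra).
  assert (a2 <> 0) by (intros Z; rewrite Z, Rabs_R0 in H2; lra).
  destruct (Rcase_abs a1), (Rcase_abs a2).
  - rewrite !Rabs_left in E by lra. lra.
  - assert (0 < a2) by lra. apply Hs in H3. lra.
  - assert (0 < a1) by lra. apply Hs in H3. lra.
  - rewrite !Rabs_right in E by lra. lra. Qed.

Lemma beta_eq l c Uc f1 f2 f3 b UF xi F alpha beta US xis Fs alphas betas :
  0 < l -> vsmooth1_on Uc c -> (forall s, Iv l s -> Uc s) ->
  (forall s, Iv l s -> dot (vderive c s) (vderive c s) = 1) ->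
  (forall s, Iv l s -> 0 < curv c s) ->
  ortho f1 f2 f3 -> det3 f1 f2 f3 = 1 ->
  (forall s, Iv l s -> vadd b (app_vec f1 f2 f3 (c s)) = c (- s)) ->
  open2 UF -> (forall s, Iv l s -> UF s 0) -> vsmooth2_on UF F ->
  (forall s v, UF s v -> cross (pu F s v) (pv F s v) <> vzero) ->
  (forall s v, UF s v -> F s v = vadd (c s) (vscale v (xi s))) ->
  (forall s v, UF s v -> vnorm (xi s) = 1) ->
  (forall s v, UF s v -> gauss_curv F s v = 0) ->
  fangle l c F alpha beta ->
  open2 US -> (forall s, Iv l s -> US s 0) -> vsmooth2_on US Fs ->
  (forall s v, US s v -> cross (pu Fs s v) (pv Fs s v) <> vzero) ->
  (forall s v, US s v -> Fs s v = vadd (c (- s)) (vscale v (xis s))) ->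
  (forall s v, US s v -> vnorm (xis s) = 1) ->
  (forall s v, US s v -> gauss_curv Fs s v = 0) ->
  fangle l (fun s => c (- s)) Fs alphas betas ->
  (forall s, Iv l s -> (0 < alphas s <-> 0 < alpha s)) ->
  (forall s, Iv l s -> curv c (- s) * cos (alphas s) = curv c s * cos (alpha s)) ->
  forall s, Iv l s -> app_vec f1 f2 f3 (xi s) = xis s.
Proof.
  intros Hl Hsm HUc Hunit Hkpos Ho Hd Hrel HUo HU0 HFsm HFimm HFrep HFxi HFgc HFang
    HSo HS0 HSsm HSimm HSrep HSxi HSgc HSang Hsign Hcurv.
  set (A := app_vec f1 f2 f3).
  set (gt := fun s => c (- s)).
  assert (HdC : forall t, Iv l t -> vder c t (vderive c t)) by (intros; eapply curve_d1; eauto).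
  assert (HdC2 : forall t, Iv l t -> vder (vderive c) t (vderive (vderive c) t)) by (intros; eapply curve_d2; eauto).
  assert (SF : forall t, Iv l t -> vder c t (vderive c t) /\ vder xi t (vderive xi t) /\ pv F t 0 = xi t /\
      det3 (vderive c t) (xi t) (vderive xi t) = 0) by (intros; apply (strip_facts c F UF xi t); auto).
  assert (SS : forall t, Iv l t -> vder gt t (vderive gt t) /\ vder xis t (vderive xis t) /\ pv Fs t 0 = xis t /\
      det3 (vderive gt t) (xis t) (vderive xis t) = 0) by (intros; apply (strip_facts gt Fs US xis t); auto).
  assert (Hin : forall t u, Rabs t < l/2 -> Rabs (u - t) < l/2 - Rabs t -> Rabs u < l/2).
  { intros t u Ht Hu. replace u with ((u - t) + t) by ring. pose proof (Rabs_triang (u - t) t). lra. }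
  assert (HnearT : forall t, Rabs t < l/2 -> near t (fun u => vadd b (A (c u)) = gt u)).
  { intros t Ht. exists (l/2 - Rabs t); split; [lra|]. intros u Hu. unfold gt. apply Hrel. apply abs_iv. eauto. }
  assert (Hgt1 : forall t, Rabs t < l/2 -> vderive gt t = A (vderive c t)).
  { intros t Ht. rewrite <- (vderive_ext_near _ _ _ (HnearT t Ht)).
    exact (vder_unique _ _ _ (vder_app f1 f2 f3 b c t _ (HdC t (abs_iv _ _ Ht)))). }
  assert (Hgt2d : forall t, Rabs t < l/2 -> vder (vderive gt) t (A (vderive (vderive c) t))).
  { intros t Ht. apply (vder_ext_near (fun u => vadd vzero (A (vderive c u)))).
    - exists (l/2 - Rabs t); split; [lra|]. intros u Hu. rewrite Hgt1 by eauto.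
      apply vec_ext; generalize (A (vderive c u)); intros; vdestr; vunf; ring.
    - exact (vder_app f1 f2 f3 vzero (vderive c) t _ (HdC2 t (abs_iv _ _ Ht))). }
  assert (Hgt2 : forall t, Rabs t < l/2 -> vderive (vderive gt) t = A (vderive (vderive c) t))
    by (intros; apply vder_unique; auto).
  assert (Hcv : forall t, Rabs t < l/2 -> curv gt t = curv c t).
  { intros t Ht. unfold curv, vnorm. rewrite Hgt2 by auto. unfold A; rewrite dot_app by auto. reflexivity. }
  assert (Hpn : forall t, Rabs t < l/2 -> pnormal gt t = A (pnormal c t)).
  { intros t Ht. unfold pnormal. rewrite Hgt2, Hcv by auto. unfold A; rewrite app_scale. reflexivity. }
  assert (Hcm : forall t, Rabs t < l/2 -> curv c (- t) = curv c t).
  { intros t Ht. rewrite <- (Hcv t Ht). unfold curv. unfold gt.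
    assert (Uc (- t)) by (apply HUc; apply abs_iv; rewrite Rabs_Ropp; auto).
    rewrite (opp_d2 Uc c t Hsm H). reflexivity. }
  assert (Hal : forall t, Rabs t < l/2 -> alphas t = alpha t).
  { intros t Ht. assert (It : Iv l t) by (apply abs_iv; auto).
    destruct (HFang t It) as [Ha _]. destruct (HSang t It) as [Has _].
    apply alpha_eq; auto. pose proof (Hcurv t It) as Hc. rewrite Hcm in Hc by auto.
    pose proof (Hkpos t It). apply (Rmult_eq_reg_l (curv c t)); auto; lra. }
  assert (Hfr : forall t, Rabs t < l/2 -> dot (vderive c t) (vderive c t) = 1 /\ dot (pnormal c t) (pnormal c t) = 1 /\
      dot (vderive c t) (pnormal c t) = 0).
  { intros t Ht. assert (It : Iv l t) by (apply abs_iv; auto). split; [|split].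
    - apply Hunit; auto.
    - apply pn_unit; auto.
    - exact (tn_orth l c Uc t Hsm HUc Hunit Ht). }
  assert (HfrA : forall t, Rabs t < l/2 -> dot (A (vderive c t)) (A (vderive c t)) = 1 /\ dot (A (pnormal c t)) (A (pnormal c t)) = 1 /\
      dot (A (vderive c t)) (A (pnormal c t)) = 0).
  { intros t Ht. destruct (Hfr t Ht) as [? [? ?]]. unfold A; rewrite !dot_app by auto. auto. }
  assert (Hxi : forall t, Rabs t < l/2 -> xi t = fvec (vderive c t) (pnormal c t) (cos (beta t)) (sin (beta t)) (cos (alpha t)) (sin (alpha t))).
  { intros t Ht. assert (It : Iv l t) by (apply abs_iv; auto). destruct (HFang t It) as [_ [_ E]].
    destruct (SF t It) as [_ [_ [P _]]]. rewrite P in E. exact E. }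
  assert (Hxis : forall t, Rabs t < l/2 -> xis t = fvec (A (vderive c t)) (A (pnormal c t)) (cos (betas t)) (sin (betas t)) (cos (alpha t)) (sin (alpha t))).
  { intros t Ht. assert (It : Iv l t) by (apply abs_iv; auto). destruct (HSang t It) as [_ [_ E]].
    destruct (SS t It) as [_ [_ [P _]]]. rewrite P in E. rewrite E. unfold binormal, tangent. fold gt.
    rewrite Hgt1, Hpn, Hal by auto. reflexivity. }
  assert (HX1 : forall t, Rabs t < l/2 -> A (xi t) = fvec (A (vderive c t)) (A (pnormal c t)) (cos (beta t)) (sin (beta t)) (cos (alpha t)) (sin (alpha t))).
  { intros t Ht. destruct (Hfr t Ht) as [? [? ?]]. rewrite Hxi by auto. unfold A. apply fvec_app; auto. }
  assert (Hint : forall s, Rabs s < l/2 -> A (xi s) = xis s).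
  { intros s Hs. assert (Is : Iv l s) by (apply abs_iv; auto).
    set (E := fun t => vderive gt t). set (X1 := fun t => A (xi t)).
    set (Gf := fun t => dot (E t) (X1 t)). set (Pf := fun t => dot (xis t) (X1 t)). set (Hf := fun t => dot (xis t) (E t)).
    set (af := fun t => (Hf t - Gf t * Pf t) / (1 - Gf t * Gf t)).
    set (bf := fun t => (Pf t - Gf t * Hf t) / (1 - Gf t * Gf t)).
    assert (Vals : forall t, Rabs t < l/2 ->
       af t = cos (betas t) - cos (beta t) * sin (betas t) / sin (beta t) /\ bf t = sin (betas t) / sin (beta t) /\
       Gf t = cos (beta t)).
    { intros t Ht. assert (It : Iv l t) by (apply abs_iv; auto).
      destruct (HfrA t Ht) as [F1 [F2 F3]].
      destruct (HFang t It) as [Ha [Hb _]]. destruct (HSang t It) as [_ [Hbs _]].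
      assert (Sb : 0 < sin (beta t)) by (apply sin_gt_0; lra).
      assert (G1 : Gf t = cos (beta t)).
      { unfold Gf, E, X1. rewrite Hgt1, HX1 by auto. destruct (frame_dots _ _ (cos (beta t)) (sin (beta t)) (cos (alpha t)) (sin (alpha t)) F1 F2 F3) as [_ [_ [K _]]]. exact K. }
      assert (H1 : Hf t = cos (betas t)).
      { unfold Hf, E. rewrite Hgt1, Hxis by auto. rewrite dot_comm. destruct (frame_dots _ _ (cos (betas t)) (sin (betas t)) (cos (alpha t)) (sin (alpha t)) F1 F2 F3) as [_ [_ [K _]]]. exact K. }
      assert (P1 : Pf t = cos (betas t) * cos (beta t) + sin (betas t) * sin (beta t)).
      { unfold Pf, X1. rewrite Hxis, HX1 by auto. rewrite fvec_dot by auto.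
        pose proof (sin2_cos2 (alpha t)) as SA. unfold Rsqr in SA.
        replace (cos (alpha t) * cos (alpha t) + sin (alpha t) * sin (alpha t)) with 1 by lra. ring. }
      pose proof (sin2_cos2 (beta t)) as SC. unfold Rsqr in SC.
      assert (Den : 1 - Gf t * Gf t = sin (beta t) * sin (beta t)) by (rewrite G1; lra).
      split; [|split; [|exact G1]].
      - change (af t) with ((Hf t - Gf t * Pf t) / (1 - Gf t * Gf t)). rewrite Den, H1, P1, G1.
        set (cb := cos (beta t)) in *. set (sb := sin (beta t)) in *. set (cbs := cos (betas t)). set (sbs := sin (betas t)).
        replace (cbs - cb * (cbs * cb + sbs * sb)) with (cbs * (1 - (sb * sb + cb * cb)) + (cbs * (sb * sb) - cb * sbs * sb)) by ring.
        rewrite SC. field. lra.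
      - change (bf t) with ((Pf t - Gf t * Hf t) / (1 - Gf t * Gf t)). rewrite Den, H1, P1, G1. field. lra. }
    destruct (HfrA s Hs) as [F1 [F2 F3]].
    destruct (HFang s Is) as [Ha [Hb _]]. destruct (HSang s Is) as [_ [Hbs _]].
    assert (Sb : 0 < sin (beta s)) by (apply sin_gt_0; lra).
    assert (Sbs : 0 < sin (betas s)) by (apply sin_gt_0; lra).
    assert (Sa : sin (alpha s) <> 0).
    { pose proof PI_RGT_0. destruct Ha as [Ha1 Ha2]. apply Rabs_def2 in Ha2. destruct Ha2.
      destruct (Rtotal_order (alpha s) 0) as [N|[Z|P]].
      - apply Rlt_not_eq. apply sin_lt_0_var; lra.
      - rewrite Z, Rabs_R0 in Ha1; lra.
      - apply Rgt_not_eq. apply sin_gt_0; lra. }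
    assert (Nid : near s (fun t => vadd (vscale (af t) (E t)) (vscale (bf t) (X1 t)) = xis t)).
    { exists (l/2 - Rabs s); split; [lra|]. intros t Ht. assert (Ht' : Rabs t < l/2) by eauto.
      destruct (Vals t Ht') as [Va [Vb _]]. rewrite Va, Vb. unfold E, X1. rewrite Hgt1, Hxis, HX1 by auto.
      assert (It : Iv l t) by (apply abs_iv; auto).
      destruct (HFang t It) as [_ [Hbt _]].
      assert (0 < sin (beta t)) by (apply sin_gt_0; lra).
      unfold fvec. generalize (A (vderive c t)) (A (pnormal c t)). intros. apply vec_ext; vdestr; vunf; field; lra. }
    assert (DE : vder E s (A (vderive (vderive c) s))) by (exact (Hgt2d s Hs)).
    assert (DX1 : vder X1 s (A (vderive xi s))).
    { apply (vder_ext_near (fun t => vadd vzero (A (xi t)))).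
      - exists 1; split; [lra|]. intros t _. unfold X1. apply vec_ext; generalize (A (xi t)); intros; vdestr; vunf; ring.
      - exact (vder_app f1 f2 f3 vzero xi s _ (proj1 (proj2 (SF s Is)))). }
    destruct (SS s Is) as [_ [DX2 [_ DLs]]].
    destruct (SF s Is) as [_ [_ [_ DLf]]].
    pose proof (d_dot _ _ _ _ _ DE DX1) as DG. pose proof (d_dot _ _ _ _ _ DX2 DE) as DH. pose proof (d_dot _ _ _ _ _ DX2 DX1) as DP.
    destruct (Vals s Hs) as [Vas [Vbs Vgs]].
    pose proof (sin2_cos2 (beta s)) as SC. unfold Rsqr in SC.
    assert (Nz : 1 - Gf s * Gf s <> 0) by (rewrite Vgs; nra).
    assert (Daf : exists a', is_derive af s a').
    { eexists. apply (d_div (fun t => Hf t - Gf t * Pf t) (fun t => 1 - Gf t * Gf t)); [| |exact Nz].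
      - apply d_minus; [exact DH| apply d_mult; [exact DG|exact DP]].
      - apply d_minus; [apply d_const| apply d_mult; [exact DG|exact DG]]. }
    assert (Dbf : exists b', is_derive bf s b').
    { eexists. apply (d_div (fun t => Pf t - Gf t * Hf t) (fun t => 1 - Gf t * Gf t)); [| |exact Nz].
      - apply d_minus; [exact DP| apply d_mult; [exact DG|exact DH]].
      - apply d_minus; [apply d_const| apply d_mult; [exact DG|exact DG]]. }
    destruct Daf as [a' Daf]. destruct Dbf as [b' Dbf].
    pose proof (vder_add _ _ _ _ _ (vder_scalf _ _ _ _ _ Daf DE) (vder_scalf _ _ _ _ _ Dbf DX1)) as DV.
    pose proof (vder_ext_near _ _ _ _ Nid DV) as DV'.
    rewrite (vder_unique _ _ _ DV') in DLs.
    assert (Xs : xis s = vadd (vscale (af s) (E s)) (vscale (bf s) (X1 s))).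
    { destruct Nid as [dd [Hdd K]]. symmetry. apply K. rewrite Rminus_diag, Rabs_R0; auto. }
    fold (E s) in DLs. rewrite Xs in DLs.
    assert (Ring : forall (E0 X E' X' : vec) a b a' b', det3 E0 (vadd (vscale a E0) (vscale b X))
        (vadd (vadd (vscale a' E0) (vscale a E')) (vadd (vscale b' X) (vscale b X'))) = b * (a * det3 E0 X E' + b * det3 E0 X X'))
      by (intros; vdestr; vunf; ring).
    rewrite Ring in DLs.
    assert (Z1 : det3 (E s) (X1 s) (A (vderive xi s)) = 0).
    { unfold E, X1. rewrite Hgt1 by auto. unfold A. rewrite det_app, Hd, DLf. ring. }
    rewrite Z1 in DLs.
    assert (Kp : 0 < curv c s) by auto.
    assert (Z2 : det3 (E s) (X1 s) (A (vderive (vderive c) s)) = - curv c s * (sin (beta s) * sin (alpha s))).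
    { rewrite <- Hgt2 by auto. rewrite c2_eq by (rewrite Hcv; auto). rewrite Hcv, Hpn by auto.
      unfold E, X1. rewrite Hgt1, HX1 by auto.
      destruct (frame_dots _ _ (cos (beta s)) (sin (beta s)) (cos (alpha s)) (sin (alpha s)) F1 F2 F3) as [_ [K _]].
      rewrite <- K. generalize (A (vderive c s)) (A (pnormal c s)) (fvec (A (vderive c s)) (A (pnormal c s)) (cos (beta s)) (sin (beta s)) (cos (alpha s)) (sin (alpha s))).
      intros; vdestr; vunf; ring. }
    rewrite Z2, Vas, Vbs in DLs.
    set (cb := cos (beta s)) in *. set (sb := sin (beta s)) in *. set (cbs := cos (betas s)) in *. set (sbs := sin (betas s)) in *.
    assert (Aeq : cbs - cb * sbs / sb = 0).
    { assert (Q : sbs / sb * (cbs - cb * sbs / sb) * (- curv c s * (sb * sin (alpha s))) = 0) by lra.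
      apply Rmult_integral in Q. destruct Q as [Q|Q].
      - apply Rmult_integral in Q. destruct Q as [Q|Q]; auto.
        exfalso. unfold Rdiv in Q. apply Rmult_integral in Q. destruct Q as [Q|Q]; [lra|].
        apply Rinv_neq_0_compat in Q; auto; lra.
      - exfalso. assert (curv c s * (sb * sin (alpha s)) <> 0).
        { apply Rmult_integral_contrapositive; split; [lra|]. apply Rmult_integral_contrapositive; split; [lra|auto]. }
        lra. }
    assert (Ecb : cbs * sb = cb * sbs).
    { assert (Ec1 : cbs = cb * sbs / sb) by lra. rewrite Ec1. field. lra. }
    pose proof (sin2_cos2 (betas s)) as SCs. unfold Rsqr in SCs. fold sbs cbs in SCs. fold sb cb in SC.
    assert (Ec : cb = cbs).
    { assert (E2 : cbs*cbs*(sb*sb) = cb*cb*(sbs*sbs)) by (transitivity ((cbs*sb)*(cbs*sb)); [ring|rewrite Ecb; ring]).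
      replace (sb*sb) with (1 - cb*cb) in E2 by lra. replace (sbs*sbs) with (1 - cbs*cbs) in E2 by lra.
      assert (E3 : cb*cb = cbs*cbs) by lra.
      assert ((cb - cbs) * (cb + cbs) = 0) by (ring_simplify; lra). apply Rmult_integral in H. destruct H; [lra|].
      assert (cbs = - cb) by lra. rewrite H0 in Ecb. assert (cb * (sb + sbs) = 0) by lra.
      apply Rmult_integral in H1. destruct H1; lra. }
    assert (Es : sb = sbs) by (subst cbs; nra).
    unfold X1 in *. rewrite HX1, Hxis by auto. fold cb sb cbs sbs. rewrite Ec, Es. reflexivity. }
  intros s Is. destruct (Rlt_le_dec (Rabs s) (l/2)) as [Hi|Hb]; [apply Hint; auto|].
  assert (Hat : Rabs s = l/2) by (unfold Iv in Is; apply Rle_antisym; auto; apply Rabs_le; lra).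
  apply (lim_eq (fun t => A (xi t)) xis s).
  - apply (vcont_ext (fun t => vadd vzero (A (xi t)))).
    + intros t. apply vec_ext; generalize (A (xi t)); intros; vdestr; vunf; ring.
    + eapply vder_vcont. exact (vder_app f1 f2 f3 vzero xi s _ (proj1 (proj2 (SF s Is)))).
  - eapply vder_vcont. exact (proj1 (proj2 (SS s Is))).
  - intros eps He. set (m := Rmin eps l).
    assert (Hm : 0 < m) by (apply Rmin_glb_lt; lra).
    assert (Hm1 : m <= eps) by apply Rmin_l. assert (Hm2 : m <= l) by apply Rmin_r.
    exists (s - s * m / l). split.
    + replace (s - s * m / l - s) with (- (s * (m / l))) by (field; lra).
      rewrite Rabs_Ropp, Rabs_mult, Hat. rewrite (Rabs_right (m / l)) by (apply Rle_ge, Rdiv_le_0_compat; lra).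
      replace (l / 2 * (m / l)) with (m / 2) by (field; lra). lra.
    + apply Hint. replace (s - s * m / l) with (s * (1 - m / l)) by (field; lra).
      rewrite Rabs_mult, Hat. assert (0 < m / l) by (apply Rdiv_lt_0_compat; lra).
      assert (m / l <= 1). { unfold Rdiv. apply (Rmult_le_reg_r l); [lra|]. rewrite Rmult_assoc, Rinv_l by lra. lra. }
      rewrite Rabs_right by lra. nra.
Qed.

Lemma vnorm1 p : vnorm p = 1 -> dot p p = 1.
Proof. unfold vnorm. intros H. rewrite <- (sqrt_sqrt (dot p p)) by apply dot_ge0. rewrite H; ring. Qed.

Lemma rep0 (c xi : R -> vec) s : vadd (c s) (vscale 0 (xi s)) = c s.
Proof. apply vec_ext; generalize (c s) (xi s); intros; vdestr; vunf; ring. Qed.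

Lemma sin_sign a : 0 < Rabs a < PI/2 -> (0 < a -> 0 < sin a) /\ (a < 0 -> sin a < 0) /\ 0 < cos a.
Proof. intros [H1 H2]. pose proof PI_RGT_0. apply Rabs_def2 in H2. destruct H2. split; [|split].
  - intros; apply sin_gt_0; lra.
  - intros; apply sin_lt_0_var; lra.
  - apply cos_gt_0; lra. Qed.

Theorem proposition4p6 :
  forall (l : R) (c : R -> vec) (F Fstar : R -> R -> vec) (alpha alphastar : R -> R),
    good_curve l c ->
    in_Dstar_normal l c F alpha ->
    in_Dstar_normal l (fun s => c (- s)) Fstar alphastar ->
    (forall s, Iv l s -> (0 < alphastar s <-> 0 < alpha s)) ->
    (forall s, Iv l s -> curv c (- s) * cos (alphastar s) = curv c s * cos (alpha s)) ->
    (congruent_small l F Fstar <-> exists T, positive_symmetry l c T).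
Proof.
  intros l c F Fs alpha alphas Hgood HF HFs Hsign Hcurv.
  destruct Hgood as [Hl [[Uc [HUc Hsm]] [Hunit [Hinj [Hkpos Hnp]]]]].
  destruct HF as [[UF [xi [HUo [HU0 [HFsm [HFimm [HFinj [HFrep [HFxi HFgc]]]]]]]]] [[beta HFang] _]].
  destruct HFs as [[US [xis [HSo [HS0 [HSsm [HSimm [HSinj [HSrep [HSxi HSgc]]]]]]]]] [[betas HSang] _]].
  assert (Hunit' : forall s, Iv l s -> dot (vderive c s) (vderive c s) = 1) by (intros; apply vnorm1; auto).
  assert (HdC : forall t, Iv l t -> vder c t (vderive c t)) by (intros; eapply curve_d1; eauto).
  destruct (tube l UF HUo HU0) as [eF [HeF KF]].
  destruct (tube l US HSo HS0) as [eS [HeS KS]].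
  assert (I0 : Iv l 0) by (unfold Iv; lra).
  assert (Hxis1 : forall s, Iv l s -> dot (xis s) (xis s) = 1) by (intros; apply vnorm1; eapply HSxi; apply HS0; eauto).
  assert (Hxi1 : forall s, Iv l s -> dot (xi s) (xi s) = 1) by (intros; apply vnorm1; eapply HFxi; apply HU0; eauto).
  split.
  -
    intros [T [eps0 [HTiso [Heps0 Hset]]]].
    destruct (iso_affine T HTiso) as [Ho HT].
    set (b := T vzero) in *. set (f1 := vsub (T e1) b) in *. set (f2 := vsub (T e2) b) in *.
    set (f3 := vsub (T e3) b) in *.
    set (A := app_vec f1 f2 f3).
    assert (HC : forall s, Iv l s -> exists t, Iv l t /\ vadd b (A (c s)) = c t).
    { intros s Hs. apply (close_pt l c (vderive c)); auto.
      intros eps He. set (e' := Rmin (Rmin eps0 eS) (Rmin 1 eps) / 2).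
      assert (He1 : 0 < e') by (unfold e'; assert (0 < Rmin (Rmin eps0 eS) (Rmin 1 eps)) by (repeat apply Rmin_glb_lt; lra); lra).
      assert (He2 : e' < eps0) by (unfold e'; pose proof (Rmin_l (Rmin eps0 eS) (Rmin 1 eps)); pose proof (Rmin_l eps0 eS); lra).
      assert (He3 : e' < eS) by (unfold e'; pose proof (Rmin_l (Rmin eps0 eS) (Rmin 1 eps)); pose proof (Rmin_r eps0 eS); lra).
      assert (He4 : e' <= 1/2) by (unfold e'; pose proof (Rmin_r (Rmin eps0 eS) (Rmin 1 eps)); pose proof (Rmin_l 1 eps); lra).
      assert (He5 : e' <= eps/2) by (unfold e'; pose proof (Rmin_r (Rmin eps0 eS) (Rmin 1 eps)); pose proof (Rmin_r 1 eps); lra).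
      destruct (proj1 (Hset e' (conj He1 He2) (T (c s)))) as [sg [om [[Hsg Hom] Heq]]].
      { exists s, 0. split; [split; auto; lra|]. rewrite HFrep by auto. rewrite rep0. reflexivity. }
      assert (Hom' : Rabs om < e') by (apply Rabs_def1; lra).
      rewrite HSrep in Heq by (apply KS; auto; lra).
      exists (- sg). split. unfold Iv in *; lra.
      rewrite <- HT, Heq.
      replace (dot (vsub (c (- sg)) (vadd (c (- sg)) (vscale om (xis sg)))) (vsub (c (- sg)) (vadd (c (- sg)) (vscale om (xis sg)))))
        with (om * om * dot (xis sg) (xis sg)) by (generalize (c (- sg)) (xis sg); intros; vdestr; vunf; ring).
      rewrite Hxis1 by auto.
      assert (om * om <= Rabs om * Rabs om) by (rewrite <- Rabs_mult; apply Rle_abs).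
      pose proof (Rabs_pos om). nra. }
    destruct (psi_main l c Uc f1 f2 f3 b Hl Hsm HUc Hunit' Hinj Ho HC) as [l0 [Hl0 Hrel]].
    assert (Habs0 : Rabs 0 < l/2) by (rewrite Rabs_R0; lra).
    set (e := vderive c 0). set (n := pnormal c 0).
    assert (He : dot e e = 1) by (apply Hunit'; auto).
    assert (Hk0 : 0 < curv c 0) by auto.
    assert (Hn : dot n n = 1) by (apply pn_unit; auto).
    assert (Hen : dot e n = 0) by (exact (tn_orth l c Uc 0 Hsm HUc Hunit' Habs0)).
    set (gt := fun s => c (- s)).
    assert (HUc0 : Uc (- 0)) by (rewrite Ropp_0; auto).
    assert (Hgt1 : vderive gt 0 = vscale (-1) e) by (unfold gt, e; rewrite (opp_d1 Uc c 0 Hsm HUc0), Ropp_0; reflexivity).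
    assert (Hgt2 : vderive (vderive gt) 0 = vderive (vderive c) 0) by (unfold gt; rewrite (opp_d2 Uc c 0 Hsm HUc0), Ropp_0; reflexivity).
    assert (Hcv0 : curv gt 0 = curv c 0) by (unfold curv; rewrite Hgt2; reflexivity).
    assert (Hpn0 : pnormal gt 0 = n) by (unfold pnormal, n; rewrite Hgt2, Hcv0; reflexivity).
    assert (HAe1 : forall p, A p = app_vec f1 f2 f3 p) by reflexivity.
    assert (HAen : A e = vscale l0 e /\ A n = n /\ (l0 = 1 -> det3 f1 f2 f3 = 1)).
    { destruct Hl0 as [E1|E1].
      - subst l0.
        assert (Hid : forall p, vadd b (A p) = p).
        { apply (fix_id l c); auto. intros s Hs. rewrite Hrel by auto. rewrite Rmult_1_l; reflexivity. }
        assert (Hb0 : b = vzero).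
        { pose proof (Hid vzero) as Z. unfold A in Z. revert Z. generalize b f1 f2 f3. intros. apply vec_ext; vdestr; vunf;
          injection Z; intros; lra. }
        assert (Hid' : forall p, A p = p).
        { intros p. rewrite <- (Hid p) at 2. rewrite Hb0. apply vec_ext; generalize (A p); intros; vdestr; vunf; ring. }
        split; [|split].
        + rewrite Hid'. apply vec_ext; vdestr; vunf; ring.
        + apply Hid'.
        + intros _. assert (F1 : f1 = e1) by (rewrite <- (Hid' e1); unfold A; apply vec_ext; vdestr; vunf; ring).
          assert (F2 : f2 = e2) by (rewrite <- (Hid' e2); unfold A; apply vec_ext; vdestr; vunf; ring).
          assert (F3 : f3 = e3) by (rewrite <- (Hid' e3); unfold A; apply vec_ext; vdestr; vunf; ring).
          rewrite F1, F2, F3. vunf. ring.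
      - subst l0.
        assert (Nr : near 0 (fun t => vadd b (A (c t)) = gt t)).
        { exists (l/2); split; [lra|]. intros t Ht. rewrite Rminus_0_r in Ht. unfold gt.
          rewrite Hrel by (apply abs_iv; auto). f_equal; ring. }
        pose proof (vder_app f1 f2 f3 b c 0 _ (HdC 0 I0)) as V1.
        pose proof (vder_ext_near _ _ _ _ Nr V1) as V2.
        pose proof (vder_unique _ _ _ V2) as V3. rewrite Hgt1 in V3.
        assert (Nr2 : near 0 (fun t => vadd vzero (A (vderive c t)) = vderive gt t)).
        { exists (l/2); split; [lra|]. intros t Ht. rewrite Rminus_0_r in Ht.
          assert (It : Iv l t) by (apply abs_iv; auto).
          assert (Nt : near t (fun u => vadd b (A (c u)) = gt u)).
          { exists (l/2 - Rabs t); split; [lra|]. intros u Hu. unfold gt.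
            rewrite Hrel. f_equal; ring. apply abs_iv. replace u with ((u - t) + t) by ring.
            pose proof (Rabs_triang (u - t) t); lra. }
          rewrite <- (vderive_ext_near _ _ _ Nt).
          rewrite (vder_unique _ _ _ (vder_app f1 f2 f3 b c t _ (HdC t It)) : vderive (fun u => vadd b (A (c u))) t = A (vderive c t)).
          apply vec_ext; generalize (A (vderive c t)); intros; vdestr; vunf; ring. }
        pose proof (vder_app f1 f2 f3 vzero (vderive c) 0 _ (curve_d2 Uc c 0 Hsm (HUc 0 I0))) as W1.
        pose proof (vder_ext_near _ _ _ _ Nr2 W1) as W2.
        pose proof (vder_unique _ _ _ W2) as W3. rewrite Hgt2 in W3.
        split; [|split].
        + symmetry; exact V3.
        + unfold n, pnormal. unfold A. rewrite app_scale. rewrite <- W3. reflexivity.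
        + intros; lra. }
    destruct HAen as [HAe [HAn Hdet1]].
    destruct (strip_facts c F UF xi 0 HUo HFsm HFimm HFrep HFgc (HU0 0 I0)) as [_ [_ [HpvF _]]].
    destruct (strip_facts gt Fs US xis 0 HSo HSsm HSimm HSrep HSgc (HS0 0 I0)) as [Hgtd [Hxisd [HpvS _]]].
    destruct (HFang 0 I0) as [Ha [Hb Hxi0]]. rewrite HpvF in Hxi0.
    destruct (HSang 0 I0) as [Has [Hbs Hx0]]. rewrite HpvS in Hx0.
    fold gt in Hx0. unfold tangent, binormal, tangent in Hx0, Hxi0. rewrite Hgt1, Hpn0 in Hx0. fold e n in Hxi0.
    set (et := vscale (-1) e) in *. set (bt := cross et n).
    assert (Het : dot et et = 1) by (unfold et; rewrite <- He; vdestr; vunf; ring).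
    assert (Hetn : dot et n = 0) by (unfold et; replace 0 with (- dot e n) by lra; vdestr; vunf; ring).
    set (w := A (xi 0)). set (x := xis 0).
    assert (Hxf : x = fvec et n (cos (betas 0)) (sin (betas 0)) (cos (alphas 0)) (sin (alphas 0))) by exact Hx0.
    assert (Hxif : xi 0 = fvec e n (cos (beta 0)) (sin (beta 0)) (cos (alpha 0)) (sin (alpha 0))) by exact Hxi0.
    set (q := vsub (vscale (dot bt x) n) (vscale (dot n x) bt)).
    assert (Hqw : dot q w = 0).
    { apply (AL l gt xis et w q (Rmin eps0 (Rmin eF eS) / 2)).
      - rewrite <- Hgt1; exact Hgtd.
      - exact Het.
      - eapply vder_vcont; exact Hxisd.
      - exact Hxis1.
      - unfold w, A. rewrite dot_app by exact Ho. apply Hxi1; auto.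
      - intros eps Heps. destruct (sep l c (vderive c) HdC Hinj 0 eps I0 Heps) as [m [Hm Km]].
        exists m; split; auto. intros sg Hsg Hge. unfold gt. rewrite Ropp_0. apply Km. unfold Iv in *; lra.
        rewrite Rminus_0_r, Rabs_Ropp; auto.
      - unfold q, bt. replace (dot (vsub (vscale (dot (cross et n) x) n) (vscale (dot n x) (cross et n))) et)
          with (dot (cross et n) x * dot et n - dot n x * 0) by (generalize x; intros; vdestr; vunf; ring).
        rewrite Hetn; ring.
      - fold x. unfold q. generalize bt n x. intros. vdestr; vunf; ring.
      - assert (0 < Rmin eps0 (Rmin eF eS)) by (repeat apply Rmin_glb_lt; lra). lra.
      - intros v Hv0 Hvd.
        assert (M1 : Rmin eps0 (Rmin eF eS) <= eps0) by apply Rmin_l.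
        assert (M2 : Rmin eps0 (Rmin eF eS) <= eF) by (eapply Rle_trans; [apply Rmin_r|apply Rmin_l]).
        assert (M3 : Rmin eps0 (Rmin eF eS) <= eS) by (eapply Rle_trans; [apply Rmin_r|apply Rmin_r]).
        assert (Heps : 0 < 2 * Rabs v < eps0) by lra.
        destruct (proj1 (Hset (2 * Rabs v) Heps (T (F 0 v)))) as [sg [om [[Hsg Hom] Heq]]].
        { exists 0, v. split; [split; [exact I0|]|reflexivity].
          pose proof (Rle_abs v) as Q1. pose proof (Rle_abs (- v)) as Q2. rewrite Rabs_Ropp in Q2. split; lra. }
        exists sg, om. split; [exact Hsg|]. split; [apply Rabs_def1; lra|].
        rewrite HSrep in Heq by (apply KS; auto; apply Rabs_def1; lra).
        rewrite HT, HFrep in Heq by (apply KF; auto; lra).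
        unfold gt. rewrite <- Heq. rewrite Ropp_0.
        assert (Hc0 : vadd b (A (c 0)) = c 0) by (unfold A; rewrite (Hrel 0 I0), Rmult_0_r; reflexivity).
        rewrite <- Hc0 at 1. unfold w, A.
        generalize (c 0) (xi 0); clearbody b f1 f2 f3; clear; intros. apply vec_ext; vdestr; vunf; ring. }
    set (cb := cos (beta 0)) in *. set (sb := sin (beta 0)) in *. set (ca := cos (alpha 0)) in *. set (sa := sin (alpha 0)) in *.
    set (cbs := cos (betas 0)) in *. set (sbs := sin (betas 0)) in *. set (cas := cos (alphas 0)) in *. set (sas := sin (alphas 0)) in *.
    destruct (frame_dots et n cbs sbs cas sas Het Hn Hetn) as [Nx [_ [_ Bx]]].
    destruct (frame_dots e n cb sb ca sa He Hn Hen) as [Nxi [Dxi _]].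
    rewrite <- Hxf in Nx, Bx. rewrite <- Hxif in Nxi, Dxi. fold bt in Bx.
    assert (Eq1 : dot q w = dot bt x * dot n w - dot n x * dot bt w) by (unfold q; generalize bt n x w; intros; vdestr; vunf; ring).
    assert (Nw : dot n w = sb * ca).
    { unfold w. rewrite <- HAn at 1. unfold A. rewrite dot_app by exact Ho. exact Nxi. }
    assert (Hl02 : l0 * l0 = 1) by (destruct Hl0 as [-> | ->]; ring).
    assert (Eet : et = vscale (- l0) (A e)).
    { rewrite HAe. unfold et. apply vec_ext; generalize e; intros; vdestr; vunf; nra. }
    assert (Bw : dot bt w = - l0 * det3 f1 f2 f3 * (sb * sa)).
    { unfold bt. change (dot (cross et n) w) with (det3 et n w). rewrite Eet. rewrite <- HAn at 1. unfold w.
      replace (det3 (vscale (- l0) (A e)) (A n) (A (xi 0))) with (- l0 * det3 (A e) (A n) (A (xi 0)))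
        by (generalize (A e) (A n) (A (xi 0)); intros; vdestr; vunf; ring).
      unfold A. rewrite det_app, Dxi. ring. }
    rewrite Eq1, Nw, Bw, Nx, Bx in Hqw.
    destruct (sin_sign _ Ha) as [Sa1 [Sa2 Ca]]. destruct (sin_sign _ Has) as [Ss1 [Ss2 Cs]].
    fold sa ca in Sa1, Sa2, Ca. fold sas cas in Ss1, Ss2, Cs.
    assert (Sb : 0 < sb) by (apply sin_gt_0; lra). assert (Sbs : 0 < sbs) by (apply sin_gt_0; lra).
    destruct (det_pm1 f1 f2 f3 Ho) as [Hd|Hd].
    +
      destruct Hl0 as [El|El].
      * exfalso. rewrite Hd, El in Hqw.
        assert (K : sbs * sb * (sas * ca + cas * sa) = 0) by lra.
        assert (K2 : sas * ca + cas * sa = 0).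
        { apply Rmult_integral in K. destruct K as [K|K]; auto. nra. }
        pose proof (Hsign 0 I0) as Sg.
        assert (alpha 0 <> 0) by (intros Z; rewrite Z, Rabs_R0 in Ha; lra).
        destruct (Rtotal_order (alpha 0) 0) as [N|[Z|P]]; [|contradiction|].
        -- assert (alphas 0 < 0).
           { destruct (Rtotal_order (alphas 0) 0) as [?|[Z|P]]; auto.
             rewrite Z, Rabs_R0 in Has; lra. apply Sg in P; lra. }
           specialize (Sa2 N). specialize (Ss2 H0). nra.
        -- assert (0 < alphas 0) by (apply Sg; auto).
           specialize (Sa1 P). specialize (Ss1 H0). nra.
      *
        subst l0. exists T. split; [exact HTiso|]. split; [|split; [|split]].
        -- unfold orientation_preserving. fold b f1 f2 f3. lra.
        -- exists (c (l/2)). intros Z. rewrite HT in Z. rewrite Hrel in Z by (unfold Iv; lra).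
           apply Hinj in Z; unfold Iv; lra.
        -- intros s Hs. exists (- s). split; [unfold Iv in *; lra|]. rewrite HT, Hrel by auto. f_equal; ring.
        -- intros t Ht. exists (- t). split; [unfold Iv in *; lra|]. rewrite HT, Hrel by (unfold Iv in *; lra). f_equal; ring.
    +
      exfalso. destruct Hl0 as [El|El].
      * rewrite (Hdet1 El) in Hd. lra.
      * rewrite Hd, El in Hqw.
        assert (K : sbs * sb * (sas * ca + cas * sa) = 0) by lra.
        assert (K2 : sas * ca + cas * sa = 0).
        { apply Rmult_integral in K. destruct K as [K|K]; auto. nra. }
        pose proof (Hsign 0 I0) as Sg.
        assert (alpha 0 <> 0) by (intros Z; rewrite Z, Rabs_R0 in Ha; lra).
        destruct (Rtotal_order (alpha 0) 0) as [N|[Z|P]]; [|contradiction|].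
        -- assert (alphas 0 < 0).
           { destruct (Rtotal_order (alphas 0) 0) as [?|[Z|P]]; auto.
             rewrite Z, Rabs_R0 in Has; lra. apply Sg in P; lra. }
           specialize (Sa2 N). specialize (Ss2 H0). nra.
        -- assert (0 < alphas 0) by (apply Sg; auto).
           specialize (Sa1 P). specialize (Ss1 H0). nra.
  - intros [T [HTiso [Hor [[p0 Hp0] [HC1 HC2]]]]].
    destruct (iso_affine T HTiso) as [Ho HT].
    set (b := T vzero) in *. set (f1 := vsub (T e1) b) in *. set (f2 := vsub (T e2) b) in *.
    set (f3 := vsub (T e3) b) in *.
    assert (Hd : det3 f1 f2 f3 = 1).
    { unfold orientation_preserving in Hor. fold b f1 f2 f3 in Hor. destruct (det_pm1 f1 f2 f3 Ho); lra. }
    assert (HC : forall s, Iv l s -> exists t, Iv l t /\ vadd b (app_vec f1 f2 f3 (c s)) = c t).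
    { intros s Hs. destruct (HC1 s Hs) as [t [Ht E]]. exists t; split; auto. rewrite <- HT; auto. }
    destruct (psi_main l c Uc f1 f2 f3 b Hl Hsm HUc Hunit' Hinj Ho HC) as [l0 [Hl0 Hrel]].
    assert (El : l0 = -1).
    { destruct Hl0 as [El|El]; auto. exfalso. subst l0.
      assert (Hid : forall p, vadd b (app_vec f1 f2 f3 p) = p).
      { apply (fix_id l c); auto. intros s Hs. rewrite Hrel by auto. rewrite Rmult_1_l; reflexivity. }
      apply Hp0. rewrite HT. apply Hid. }
    subst l0.
    assert (Hrel' : forall s, Iv l s -> vadd b (app_vec f1 f2 f3 (c s)) = c (- s)).
    { intros s Hs. rewrite Hrel by auto. f_equal; ring. }
    assert (HB : forall s, Iv l s -> app_vec f1 f2 f3 (xi s) = xis s).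
    { apply (beta_eq l c Uc f1 f2 f3 b UF xi F alpha beta US xis Fs alphas betas); auto. }
    exists T, (Rmin eF eS). split; [exact HTiso|]. split; [apply Rmin_glb_lt; auto|].
    intros eps [He1 He2] p.
    assert (Eq : forall s v, Omega l eps s v -> T (F s v) = Fs s v).
    { intros s v [Hs Hv]. assert (Hv' : Rabs v < eps) by (apply Rabs_def1; lra).
      assert (eps <= eF) by (pose proof (Rmin_l eF eS); lra). assert (eps <= eS) by (pose proof (Rmin_r eF eS); lra).
      rewrite HFrep by (apply KF; auto; lra). rewrite HSrep by (apply KS; auto; lra).
      rewrite HT, <- Hrel', <- HB by auto.
      generalize (c s) (xi s); clearbody b f1 f2 f3; clear; intros. apply vec_ext; vdestr; vunf; ring. }
    split; intros [s [v [Hsv Hp]]]; exists s, v; split; auto; rewrite Hp; [|symmetry]; apply Eq; auto.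
Qed.
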